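(* Let $0<\alpha<1$ and let $f\in L^1_{1-\alpha}([0,1[)$ be locally contracting on $[0,1[$ with $f(0)=0$. Then $(D_\alpha f)(0)$ exists and equals $0$.
   Context: Fourier coefficients: $\widehat h(s)=\frac1{2\pi}\int_{-\pi}^{\pi}h(\theta)e^{-is\theta}d\theta$; $T_N(h)$ is the $(N+1)\times(N+1)$ matrix with $(T_N(h))_{k+1,l+1}=\widehat h(k-l)$, $0\le k,l\le N$. $\varphi_{\alpha,R}(\theta)=(1-Re^{i\theta})^{\alpha}(1+Re^{-i\theta})^{\alpha}$ (principal branch), $\varphi_\alpha=\lim_{R\to1^-}\varphi_{\alpha,R}$. For $f$ on $[0,1[$ (with $f(1)$ set to $0$ since it is not defined), $X_N\in\mathbb R^{N+1}$ with $(X_N)_l=f(l/N)$. $f$ is $\alpha$-derivable at $x\in[0,1]$ if $\lim_{N\to+\infty}N^{\alpha}\sum_{l=0}^{N}(T_N(\varphi_\alpha))_{k+1,l+1}(X_N)_l$, $k=[Nx]$, exists and is finite; its value is $(D_\alpha f)(x)$. Locally contracting on $[0,1[$: Lipschitz on every compact interval contained in $[0,1[$. $f\in L^1_{1-\alpha}([0,1[)$ means there is $\gamma\in[0,1-\alpha]$ with $f(x)=O(x^{-\gamma})$ and $f(1-x)=O(x^{-\gamma})$ as $x\to0^+$. *)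

(* Defs.v *)
From Stdlib Require Import Reals ZArith.
From Coquelicot Require Import Coquelicot.
Open Scope R_scope.

Definition Cexpi (t : R) : C := (cos t, sin t).

(* Principal argument of a complex number, with values in ]-PI, PI]
   (Arg 0 := 0, irrelevant). *)
Definition Arg (z : C) : R :=
  let x := fst z in let y := snd z in
  if Rlt_dec 0 x then atan (y / x)
  else if Rlt_dec x 0 then
         (if Rle_dec 0 y then atan (y / x) + PI else atan (y / x) - PI)
  else if Rlt_dec 0 y then PI / 2
  else if Rlt_dec y 0 then - (PI / 2)
  else 0.

(* Principal branch of z^a = exp (a Log z), Log z = ln |z| + i Arg z;
   0^a := 0 (a > 0 here). *)
Definition Cpow (z : C) (a : R) : C :=
  if Req_EM_T (Cmod z) 0 then (0%R, 0%R)
  else (exp (a * ln (Cmod z)) * cos (a * Arg z),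
        exp (a * ln (Cmod z)) * sin (a * Arg z)).

Definition phiR (a Rr theta : R) : C :=
  Cmult (Cpow (Cminus (RtoC 1) (Cmult (RtoC Rr) (Cexpi theta))) a)
        (Cpow (Cplus (RtoC 1) (Cmult (RtoC Rr) (Cexpi (- theta)))) a).

Definition phi (a theta : R) : C :=
  @lim C_R_CompleteNormedModule (filtermap (fun Rr => phiR a Rr theta) (at_left 1)).

Definition fourier (h : R -> C) (s : Z) : C :=
  Cmult (RtoC (/ (2 * PI)))
        (RInt (V := C_R_CompleteNormedModule)
              (fun theta => Cmult (h theta) (Cexpi (- (IZR s * theta)))) (- PI) PI).

(* (T_N(h))_{k+1,l+1} = hat h (k - l), for 0 <= k,l <= N *)
Definition toeplitz (h : R -> C) (k l : nat) : C :=
  fourier h (Z.of_nat k - Z.of_nat l)%Z.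

(* (X_N)_l = f(l/N), with f(1) := 0 (f is only defined on [0,1[) *)
Definition XN (f : R -> R) (N l : nat) : R :=
  if (l <? N)%nat then f (INR l / INR N) else 0.

Definition alpha_seq (a : R) (f : R -> R) (x : R) (N : nat) : C :=
  let k := Z.to_nat (Int_part (INR N * x)) in
  Cmult (RtoC (Rpower (INR N) a))
        (sum_n (fun l => Cmult (toeplitz (phi a) k l) (RtoC (XN f N l))) N).

Definition is_alpha_derivative (a : R) (f : R -> R) (x : R) (L : C) : Prop :=
  filterlim (alpha_seq a f x) eventually (locally L).

Definition locally_contracting (f : R -> R) : Prop :=
  forall a b : R, 0 <= a -> b < 1 ->
    exists K : R, forall x y : R, a <= x <= b -> a <= y <= b ->
      Rabs (f x - f y) <= K * Rabs (x - y).

Definition bigO_0plus (g h : R -> R) : Prop :=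
  exists M d : R, 0 < d /\ forall t : R, 0 < t < d -> Rabs (g t) <= M * Rabs (h t).

Definition L1_weight (a : R) (f : R -> R) : Prop :=
  exists g : R, 0 <= g <= 1 - a /\
    bigO_0plus f (fun t => Rpower t (- g)) /\
    bigO_0plus (fun t => f (1 - t)) (fun t => Rpower t (- g)).

(* Main.v *)
Require Import Defs.
From Stdlib Require Import Reals ZArith Lra Lia.
From Coquelicot Require Import Coquelicot.
Open Scope R_scope.


Fixpoint gb (x : R) (n : nat) : R :=
  match n with O => 1 | S k => gb x k * (x - INR k) / INR (S k) end.
Fixpoint Ap (x : R) (n : nat) : R :=
  match n with O => 1 | S k => Ap x k * (1 - x / INR (S k)) end.

Lemma Ap_Sdef x n : Ap x (S n) = Ap x n * (1 - x / INR (S n)).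
Proof. reflexivity. Qed.
Lemma gb_Sdef x n : gb x (S n) = gb x n * (x - INR n) / INR (S n).
Proof. reflexivity. Qed.

Lemma INR_S_pos n : 0 < INR (S n).
Proof. apply lt_0_INR; lia. Qed.

Section Binom.
Variable al : R.
Hypothesis Hal : 0 < al < 1.

Lemma Ap_pos n : 0 < Ap al n.
Proof.
  induction n. simpl; lra. rewrite Ap_Sdef.
  apply Rmult_lt_0_compat; auto.
  pose proof (INR_S_pos n). assert (1 <= INR (S n)) by (apply (le_INR 1); lia).
  assert (al / INR (S n) < 1). { apply Rmult_lt_reg_r with (INR (S n)); [lra|].
  unfold Rdiv. rewrite Rmult_assoc, Rinv_l by lra. rewrite Rmult_1_r, Rmult_1_l. apply Rlt_le_trans with 1; [apply Hal|exact H0]. } lra.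
Qed.

Lemma Ap_S n : Ap al (S n) = Ap al n - al / INR (S n) * Ap al n.
Proof. rewrite Ap_Sdef. ring. Qed.

Lemma Ap_le1 n : Ap al n <= 1.
Proof.
  induction n. simpl; lra. rewrite Ap_S.
  pose proof (Ap_pos n). pose proof (INR_S_pos n).
  assert (0 <= al / INR (S n) * Ap al n).
  { apply Rmult_le_pos; [apply Rlt_le, Rdiv_lt_0_compat|]; lra. } lra.
Qed.

Lemma Ap_decr n : Ap al (S n) <= Ap al n.
Proof.
  rewrite Ap_S. pose proof (Ap_pos n). pose proof (INR_S_pos n).
  assert (0 <= al / INR (S n) * Ap al n).
  { apply Rmult_le_pos; [apply Rlt_le, Rdiv_lt_0_compat|]; lra. } lra.
Qed.

Lemma gb_S n : gb al (S n) = (-1) ^ n * (al / INR (S n) * Ap al n).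
Proof.
  induction n.
  - simpl. field.
  - change (gb al (S (S n))) with (gb al (S n) * (al - INR (S n)) / INR (S (S n))).
    rewrite IHn. rewrite Ap_Sdef. rewrite <- tech_pow_Rmult.
    pose proof (INR_S_pos n). pose proof (INR_S_pos (S n)).
    field. lra.
Qed.

Lemma gb_abs_S n : Rabs (gb al (S n)) = Ap al n - Ap al (S n).
Proof.
  rewrite gb_S, Rabs_mult, pow_1_abs, Rmult_1_l, Ap_S.
  pose proof (Ap_pos n). pose proof (INR_S_pos n).
  rewrite Rabs_right. ring.
  apply Rle_ge, Rmult_le_pos; [apply Rlt_le, Rdiv_lt_0_compat|]; lra.
Qed.

Lemma gb_abs_decr n : Rabs (gb al (S n)) <= Rabs (gb al n).
Proof.
  change (gb al (S n)) with (gb al n * (al - INR n) / INR (S n)).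
  unfold Rdiv. rewrite !Rabs_mult.
  pose proof (INR_S_pos n). pose proof (pos_INR n).
  rewrite (Rabs_right (/ _)) by (apply Rle_ge, Rlt_le, Rinv_0_lt_compat; lra).
  rewrite Rmult_assoc. rewrite <- (Rmult_1_r (Rabs (gb al n))) at 2.
  apply Rmult_le_compat_l. apply Rabs_pos.
  rewrite S_INR in *. apply Rmult_le_reg_r with (INR n + 1). lra.
  rewrite Rmult_assoc, Rinv_l, Rmult_1_r by lra. rewrite Rmult_1_l.
  unfold Rabs; destruct Rcase_abs; lra.
Qed.

Lemma gb_abs_mono m n : (m <= n)%nat -> Rabs (gb al n) <= Rabs (gb al m).
Proof.
  induction 1. lra. eapply Rle_trans. apply gb_abs_decr. auto.
Qed.

Lemma gb_abs_le1 n : Rabs (gb al n) <= 1.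
Proof.
  replace 1 with (Rabs (gb al 0)) by (simpl; rewrite Rabs_R1; auto).
  apply gb_abs_mono; lia.
Qed.

Lemma gb_abs_S_le n : Rabs (gb al (S n)) <= / INR (S n).
Proof.
  rewrite gb_S, Rabs_mult, pow_1_abs, Rmult_1_l.
  pose proof (Ap_pos n). pose proof (Ap_le1 n). pose proof (INR_S_pos n).
  rewrite Rabs_right.
  2: apply Rle_ge, Rmult_le_pos; [apply Rlt_le, Rdiv_lt_0_compat|]; lra.
  unfold Rdiv. rewrite Rmult_comm, <- Rmult_assoc.
  rewrite <- (Rmult_1_l (/ INR (S n))) at 2.
  apply Rmult_le_compat_r. apply Rlt_le, Rinv_0_lt_compat; lra.
  assert (Ap al n * al <= 1 * 1) by (apply Rmult_le_compat; lra). lra.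
Qed.

End Binom.

Lemma gb_pascal x n : gb (x + 1) (S n) = gb x n + gb x (S n).
Proof.
  induction n.
  - simpl. field.
  - change (gb (x+1) (S (S n))) with (gb (x+1) (S n) * (x + 1 - INR (S n)) / INR (S (S n))).
    rewrite IHn.
    change (gb x (S (S n))) with (gb x (S n) * (x - INR (S n)) / INR (S (S n))).
    change (gb x (S n)) with (gb x n * (x - INR n) / INR (S n)).
    pose proof (INR_S_pos n). pose proof (INR_S_pos (S n)).
    rewrite !S_INR in *. field. lra.
Qed.

Lemma gb2_bound x n : 1 <= x <= 2 ->
  Rabs (gb x (S (S n))) <= 2 / (INR (S n) * INR (S (S n))).
Proof.
  intros Hx. induction n.
  - simpl. replace (1 * (x - 0) / 1 * (x - 1) / (1 + 1)) with (x * (x-1) / 2) by field.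
    rewrite Rabs_right. apply Rmult_le_reg_r with 2. lra.
    unfold Rdiv. rewrite Rmult_assoc, Rinv_l by lra. field_simplify. nra.
    apply Rle_ge. apply Rmult_le_pos. nra. lra.
  - change (gb x (S (S (S n)))) with (gb x (S (S n)) * (x - INR (S (S n))) / INR (S (S (S n)))).
    pose proof (pos_INR n).
    unfold Rdiv. rewrite !Rabs_mult.
    assert (Rabs (x - INR (S (S n))) <= INR (S n)).
    { rewrite !S_INR. unfold Rabs; destruct Rcase_abs; lra. }
    rewrite (Rabs_right (/ INR (S (S (S n))))).
    2: apply Rle_ge, Rlt_le, Rinv_0_lt_compat, INR_S_pos.
    eapply Rle_trans.
    apply Rmult_le_compat_r. apply Rlt_le, Rinv_0_lt_compat, INR_S_pos.
    apply Rmult_le_compat. apply Rabs_pos. apply Rabs_pos. apply IHn. apply H0.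
    rewrite !S_INR. apply Req_le. field. lra.
Qed.


Lemma ln1p_le x : 0 < 1 + x -> ln (1 + x) <= x.
Proof.
  intros H. rewrite <- (ln_exp x) at 2. apply ln_le; auto. apply exp_ineq1_le.
Qed.

Lemma Ap_pow al n : 0 < al < 1 -> Ap al n * Rpower (INR n + 1) al <= 1.
Proof.
  intros Hal. induction n.
  - simpl. rewrite Rplus_0_l. unfold Rpower. rewrite ln_1, Rmult_0_r, exp_0. lra.
  - rewrite Ap_Sdef. pose proof (pos_INR n).
    assert (E : INR (S n) + 1 = (INR n + 1) * (1 + / (INR n + 1))).
    { rewrite S_INR. field. lra. }
    assert (P1 : 0 < INR n + 1) by lra.
    assert (P2 : 0 < 1 + / (INR n + 1)) by (pose proof (Rinv_0_lt_compat _ P1); lra).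
    rewrite E, <- Rpower_mult_distr by auto.
    rewrite S_INR.
    set (x := / (INR n + 1)).
    assert (Hx : 0 < x <= 1). { unfold x. split. apply Rinv_0_lt_compat; lra.
      rewrite <- Rinv_1. apply Rinv_le_contravar; lra. }
    replace (al / (INR n + 1)) with (al * x) by (unfold x; field; lra).
    assert (Hp : Rpower (1 + x) al <= exp (al * x)).
    { unfold Rpower. apply exp_le_3 || idtac.
      destruct (Rle_lt_or_eq_dec _ _ (Rmult_le_compat_l al _ _ (Rlt_le _ _ (proj1 Hal)) (ln1p_le x ltac:(lra)))) as [h|h].
      apply Rlt_le, exp_increasing; auto. rewrite h; lra. }
    assert (Hq : (1 - al * x) * exp (al * x) <= 1).
    { pose proof (exp_ineq1_le (- (al * x))).
      assert (0 <= 1 - al * x) by nra.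
      replace 1 with (exp (- (al * x)) * exp (al * x)) at 2 by (rewrite <- exp_plus; replace (- (al * x) + al * x) with 0 by ring; apply exp_0).
      apply Rmult_le_compat_r. apply Rlt_le, exp_pos. lra. }
    pose proof (Ap_pos al Hal n).
    assert (0 <= Rpower (INR n + 1) al) by (apply Rlt_le, exp_pos).
    assert (0 <= 1 - al * x) by nra.
    assert (0 <= Rpower (1+x) al) by (apply Rlt_le, exp_pos).
    replace (Ap al n * (1 - al * x) * (Rpower (INR n + 1) al * Rpower (1 + x) al))
      with ((Ap al n * Rpower (INR n + 1) al) * ((1 - al * x) * Rpower (1 + x) al)) by ring.
    apply Rle_trans with (1 * 1); [|lra].
    apply Rmult_le_compat; [apply Rmult_le_pos; lra|apply Rmult_le_pos; lra|auto|].
    eapply Rle_trans; [|apply Hq]. apply Rmult_le_compat_l; auto.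
Qed.

Lemma Ap_bound al n : 0 < al < 1 -> Ap al n <= Rpower (INR n + 1) (- al).
Proof.
  intros Hal. pose proof (Ap_pow al n Hal).
  rewrite Rpower_Ropp. assert (0 < Rpower (INR n + 1) al) by apply exp_pos.
  apply Rmult_le_reg_r with (Rpower (INR n + 1) al); auto.
  rewrite Rinv_l by lra. auto.
Qed.

Lemma gb_bound al n : 0 < al < 1 ->
  Rabs (gb al (S n)) <= al * Rpower (INR (S n)) (- 1 - al).
Proof.
  intros Hal. rewrite gb_S by auto. rewrite Rabs_mult, pow_1_abs, Rmult_1_l.
  pose proof (Ap_pos al Hal n). pose proof (INR_S_pos n).
  rewrite Rabs_right.
  2: apply Rle_ge, Rmult_le_pos; [apply Rlt_le, Rdiv_lt_0_compat|]; lra.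
  replace (-1 - al) with (- (1) + - al) by ring.
  rewrite Rpower_plus, (Rpower_Ropp _ 1), Rpower_1 by auto.
  unfold Rdiv. rewrite Rmult_assoc. apply Rmult_le_compat_l. lra.
  apply Rmult_le_compat_l. apply Rlt_le, Rinv_0_lt_compat; auto.
  rewrite S_INR. apply Ap_bound; auto.
Qed.


Fixpoint Cnpow (z : C) (n : nat) : C :=
  match n with O => RtoC 1 | S k => Cmult z (Cnpow z k) end.
Fixpoint cs (u : nat -> C) (n : nat) : C :=
  match n with O => RtoC 0 | S k => Cplus (cs u k) (u k) end.
Fixpoint rs (u : nat -> R) (n : nat) : R :=
  match n with O => 0 | S k => rs u k + u k end.

Lemma Cmod_Cnpow z n : Cmod (Cnpow z n) = Cmod z ^ n.
Proof. induction n; simpl. apply Cmod_1. rewrite Cmod_mult, IHn. auto. Qed.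

Lemma Cmod_cs_le u n : Cmod (cs u n) <= rs (fun j => Cmod (u j)) n.
Proof.
  induction n; simpl. rewrite Cmod_0; lra.
  eapply Rle_trans. apply Cmod_triangle. lra.
Qed.

Lemma rs_le u v n : (forall j, (j < n)%nat -> u j <= v j) -> rs u n <= rs v n.
Proof.
  induction n; simpl; intros H. lra.
  apply Rplus_le_compat. apply IHn; intros; apply H; try lia. apply H; try lia.
Qed.

Lemma rs_nonneg u n : (forall j, (j < n)%nat -> 0 <= u j) -> 0 <= rs u n.
Proof.
  induction n; simpl; intros H. lra.
  assert (0 <= u n) by (apply H; try lia). assert (0 <= rs u n) by (apply IHn; intros; apply H; lia). lra.
Qed.

Lemma rs_ext u v n : (forall j, (j < n)%nat -> u j = v j) -> rs u n = rs v n.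
Proof.
  induction n; simpl; intros H. auto.
  f_equal. apply IHn; intros; apply H; lia. apply H; lia.
Qed.

Lemma cs_ext u v n : (forall j, (j < n)%nat -> u j = v j) -> cs u n = cs v n.
Proof.
  induction n; simpl; intros H. auto.
  f_equal. apply IHn; intros; apply H; lia. apply H; lia.
Qed.

Lemma rs_plus u v n : rs (fun j => u j + v j) n = rs u n + rs v n.
Proof. induction n; simpl. lra. rewrite IHn. ring. Qed.
Lemma rs_scal c u n : rs (fun j => c * u j) n = c * rs u n.
Proof. induction n; simpl. lra. rewrite IHn. ring. Qed.
Lemma rs_opp u n : rs (fun j => - u j) n = - rs u n.
Proof. induction n; simpl. lra. rewrite IHn. ring. Qed.

Lemma rs_abs u n : Rabs (rs u n) <= rs (fun j => Rabs (u j)) n.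
Proof.
  induction n; simpl. rewrite Rabs_R0; lra.
  eapply Rle_trans. apply Rabs_triang. lra.
Qed.

Lemma cs_fst u n : fst (cs u n) = rs (fun j => fst (u j)) n.
Proof. induction n; simpl; auto. rewrite IHn; auto. Qed.
Lemma cs_snd u n : snd (cs u n) = rs (fun j => snd (u j)) n.
Proof. induction n; simpl; auto. rewrite IHn; auto. Qed.

Definition Cder (f : R -> C) (t : R) (d : C) : Prop :=
  is_derive (fun s => fst (f s)) t (fst d) /\ is_derive (fun s => snd (f s)) t (snd d).

Lemma Cder_ext f g t d : (forall s, f s = g s) -> Cder f t d -> Cder g t d.
Proof.
  intros E [H1 H2]. split; [eapply is_derive_ext; [|exact H1]|eapply is_derive_ext; [|exact H2]];
  intros s; cbv beta; rewrite E; auto.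
Qed.

Lemma is_derive_Rconst (c t : R) : is_derive (fun _ : R => c) t 0.
Proof. auto_derive; auto. Qed.

Lemma Cder_const c t : Cder (fun _ => c) t (RtoC 0).
Proof. split; simpl; apply is_derive_Rconst. Qed.

Lemma Cder_plus f g t df dg : Cder f t df -> Cder g t dg ->
  Cder (fun s => Cplus (f s) (g s)) t (Cplus df dg).
Proof.
  intros [F1 F2] [G1 G2]; split; simpl.
  apply (is_derive_plus (fun s => fst (f s)) (fun s => fst (g s))); auto.
  apply (is_derive_plus (fun s => snd (f s)) (fun s => snd (g s))); auto.
Qed.

Lemma is_derive_Rmult (f g : R -> R) x df dg : is_derive f x df -> is_derive g x dg ->
  is_derive (fun s => f s * g s) x (df * g x + f x * dg).
Proof.
  intros. apply (is_derive_mult f g x df dg); auto. intros; apply Rmult_comm.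
Qed.

Lemma is_derive_Rminus (f g : R -> R) x df dg : is_derive f x df -> is_derive g x dg ->
  is_derive (fun s => f s - g s) x (df - dg).
Proof. intros. apply (is_derive_minus f g x df dg); auto. Qed.

Lemma is_derive_Rplus (f g : R -> R) x df dg : is_derive f x df -> is_derive g x dg ->
  is_derive (fun s => f s + g s) x (df + dg).
Proof. intros. apply (is_derive_plus f g x df dg); auto. Qed.

Lemma Cder_mult f g t df dg : Cder f t df -> Cder g t dg ->
  Cder (fun s => Cmult (f s) (g s)) t (Cplus (Cmult df (g t)) (Cmult (f t) dg)).
Proof.
  intros [F1 F2] [G1 G2]; split; simpl.
  - eapply is_derive_ext. intros s. reflexivity.
    evar (e : R). replace (fst df * fst (g t) - snd df * snd (g t) + (fst (f t) * fst dg - snd (f t) * snd dg)) with e.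
    apply is_derive_Rminus; apply is_derive_Rmult; eauto.
    unfold e; ring.
  - evar (e : R). replace (fst df * snd (g t) + snd df * fst (g t) + (fst (f t) * snd dg + snd (f t) * fst dg)) with e.
    apply is_derive_Rplus; apply is_derive_Rmult; eauto.
    unfold e; ring.
Qed.

Lemma Cder_real (r : R -> R) t d : is_derive r t d -> Cder (fun s => RtoC (r s)) t (RtoC d).
Proof. intros H; split; simpl; auto. apply is_derive_Rconst. Qed.

Lemma Cder_cs (u du : nat -> R -> C) t n :
  (forall j, (j < n)%nat -> Cder (u j) t (du j t)) ->
  Cder (fun s => cs (fun j => u j s) n) t (cs (fun j => du j t) n).
Proof.
  induction n; simpl; intros H. apply Cder_const.
  apply Cder_plus. apply IHn; intros; apply H; try lia. apply H; try lia.
Qed.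

Lemma Cmod_le_sum z : Cmod z <= Rabs (fst z) + Rabs (snd z).
Proof.
  unfold Cmod.
  pose proof (Rabs_pos (fst z)). pose proof (Rabs_pos (snd z)).
  rewrite <- (sqrt_square (Rabs (fst z) + Rabs (snd z))) by lra.
  apply sqrt_le_1_alt.
  rewrite <- (pow2_abs (fst z)), <- (pow2_abs (snd z)). nra.
Qed.

Lemma fst_le_Cmod z : Rabs (fst z) <= Cmod z.
Proof. pose proof (Rmax_Cmod z). eapply Rle_trans; [|eauto]. apply Rmax_l. Qed.
Lemma snd_le_Cmod z : Rabs (snd z) <= Cmod z.
Proof. pose proof (Rmax_Cmod z). eapply Rle_trans; [|eauto]. apply Rmax_r. Qed.

Lemma real_mvt_bound (h dh : R -> R) M :
  (forall t, 0 <= t <= 1 -> is_derive h t (dh t)) ->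
  (forall t, 0 <= t <= 1 -> Rabs (dh t) <= M) ->
  Rabs (h 1 - h 0) <= M.
Proof.
  intros D B.
  destruct (MVT_gen h 0 1 dh) as [c [Hc E]].
  - intros x Hx. apply D. rewrite Rmin_left, Rmax_right in Hx by lra. lra.
  - intros x Hx. rewrite Rmin_left, Rmax_right in Hx by lra.
    apply continuity_pt_filterlim. apply (ex_derive_continuous h).
    eexists; apply D; auto.
  - rewrite Rmin_left, Rmax_right in Hc by lra.
    rewrite E, Rminus_0_r, Rmult_1_r. apply B; auto.
Qed.

Lemma mvt_bound (h dh : R -> C) M :
  (forall t, 0 <= t <= 1 -> Cder h t (dh t)) ->
  (forall t, 0 <= t <= 1 -> Cmod (dh t) <= M) ->
  Cmod (Cminus (h 1) (h 0)) <= 2 * M.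
Proof.
  intros D B.
  eapply Rle_trans. apply Cmod_le_sum.
  simpl.
  assert (Rabs (fst (h 1) - fst (h 0)) <= M).
  { apply (real_mvt_bound (fun s => fst (h s)) (fun s => fst (dh s))).
    intros; apply D; auto. intros; eapply Rle_trans. apply fst_le_Cmod. apply B; auto. }
  assert (Rabs (snd (h 1) - snd (h 0)) <= M).
  { apply (real_mvt_bound (fun s => snd (h s)) (fun s => snd (dh s))).
    intros; apply D; auto. intros; eapply Rle_trans. apply snd_le_Cmod. apply B; auto. }
  unfold Rminus in *. lra.
Qed.


Definition Sser (al : R) (n : nat) (w : C) : C :=
  cs (fun j => Cmult (RtoC (gb al j)) (Cnpow w j)) (S n).

Lemma Cder_eq f t d d' : Cder f t d -> d = d' -> Cder f t d'.
Proof. intros H E; subst; auto. Qed.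

Lemma Arg_pos z : 0 < fst z -> Arg z = atan (snd z / fst z).
Proof. intros H. unfold Arg. destruct (Rlt_dec 0 (fst z)); [reflexivity|lra]. Qed.

Lemma Cpow_eq z a : Cmod z <> 0 -> Defs.Cpow z a =
  (exp (a * ln (Cmod z)) * cos (a * Arg z), exp (a * ln (Cmod z)) * sin (a * Arg z)).
Proof. intros H. unfold Defs.Cpow. destruct (Req_EM_T (Cmod z) 0); [contradiction|reflexivity]. Qed.

Lemma ln_sqrt' x : 0 < x -> ln (sqrt x) = ln x / 2.
Proof. intros. rewrite <- Rpower_sqrt by auto. rewrite ln_Rpower. field. Qed.

Lemma pow_le1 t n : 0 <= t <= 1 -> 0 <= t ^ n <= 1.
Proof. intros H. induction n; simpl. lra. nra. Qed.

Lemma Cmod_tw t w : Cmod (Cmult (RtoC t) w) = Rabs t * Cmod w.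
Proof. rewrite Cmod_mult, Cmod_R. auto. Qed.

Section ODE.
Variables al w1 w2 : R.
Hypothesis Hal : 0 < al < 1.

Definition X t := 1 + t * w1.
Definition Y t := t * w2.
Definition Qf t := X t ^ 2 + Y t ^ 2.
Definition L1 t := ln (Qf t) / 2.
Definition L2 t := atan (Y t / X t).
Definition Ef t : C := (exp (- al * L1 t) * cos (al * L2 t), - (exp (- al * L1 t) * sin (al * L2 t))).
Definition D1 t := (X t * w1 + Y t * w2) / Qf t.
Definition D2 t := (w2 * X t - Y t * w1) / Qf t.
Definition dE t : C := Cmult (RtoC (- al)) (Cmult (D1 t, D2 t) (Ef t)).

Lemma Qf_pos t : 0 < X t -> 0 < Qf t.
Proof. intros. unfold Qf. pose proof (pow2_ge_0 (Y t)). nra. Qed.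

Lemma Ef_der t : 0 < X t -> Cder Ef t (dE t).
Proof.
  intros HX. pose proof (Qf_pos t HX) as HQ.
  split.
  - unfold Ef, dE, L1, L2, Qf, X, Y. cbv beta. simpl fst. simpl snd.
    unfold Qf, L1, L2, X, Y in *.
    auto_derive.
    + split; [nra| split; [intro; lra | exact I]].
    + unfold D1, D2, Qf, X, Y. set (x := 1 + t * w1) in *. set (y := t * w2) in *.
      replace (x * (x * 1) + y * (y * 1)) with (x ^ 2 + y ^ 2) by ring.
      set (E := exp (- al * (ln (x ^ 2 + y ^ 2) * / 2))).
      replace (exp (- al * (ln (x ^ 2 + y ^ 2) / 2))) with E by (unfold E; f_equal).
      set (c := cos (al * atan (y * / x))).
      replace (cos (al * atan (y / x))) with c by auto.
      set (s := sin (al * atan (y * / x))).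
      replace (sin (al * atan (y / x))) with s by auto.
      field. split; intro; lra.
  - unfold Ef, dE, L1, L2, Qf, X, Y. cbv beta. simpl fst. simpl snd.
    unfold Qf, L1, L2, X, Y in *.
    auto_derive.
    + split; [nra| split; [intro; lra | exact I]].
    + unfold D1, D2, Qf, X, Y. set (x := 1 + t * w1) in *. set (y := t * w2) in *.
      replace (x * (x * 1) + y * (y * 1)) with (x ^ 2 + y ^ 2) by ring.
      set (E := exp (- al * (ln (x ^ 2 + y ^ 2) * / 2))).
      replace (exp (- al * (ln (x ^ 2 + y ^ 2) / 2))) with E by (unfold E; f_equal).
      set (c := cos (al * atan (y * / x))).
      replace (cos (al * atan (y / x))) with c by auto.
      set (s := sin (al * atan (y * / x))).
      replace (sin (al * atan (y / x))) with s by auto.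
      field. split; intro; lra.
Qed.


Let w : C := (w1, w2).
Definition onetw t : C := Cplus (RtoC 1) (Cmult (RtoC t) w).
Definition Sf n t : C := cs (fun j => Cmult (RtoC (gb al j * t ^ j)) (Cnpow w j)) (S n).
Definition dSf n t : C := cs (fun j => Cmult (RtoC (gb al j * (INR j * t ^ pred j))) (Cnpow w j)) (S n).
Definition PL n t : C := Cminus (Cmult (onetw t) (dSf n t)) (Cmult (RtoC al) (Cmult w (Sf n t))).

Lemma onetw_XY t : onetw t = (X t, Y t).
Proof. unfold onetw, X, Y, w. apply injective_projections; simpl; ring. Qed.

Lemma Sf_der n t : Cder (Sf n) t (dSf n t).
Proof.
  unfold Sf, dSf. apply (Cder_cs (fun j s => Cmult (RtoC (gb al j * s ^ j)) (Cnpow w j))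
    (fun j s => Cmult (RtoC (gb al j * (INR j * s ^ pred j))) (Cnpow w j)) t (S n)).
  intros j _. eapply Cder_eq. apply Cder_mult. apply Cder_real.
  2: apply Cder_const.
  - auto_derive; auto. 
  - apply injective_projections; simpl; ring.
Qed.

Lemma PL_id n t : PL n t = Copp (Cmult (RtoC (INR (S n) * gb al (S n) * t ^ n)) (Cnpow w (S n))).
Proof.
  induction n.
  - unfold PL, Sf, dSf, w. simpl cs. simpl Cnpow. rewrite gb_Sdef. simpl gb.
    apply injective_projections; simpl; field.
  - assert (E1 : PL (S n) t = Cplus (PL n t)
       (Cminus (Cmult (onetw t) (Cmult (RtoC (gb al (S n) * (INR (S n) * t ^ n))) (Cnpow w (S n))))
               (Cmult (RtoC al) (Cmult w (Cmult (RtoC (gb al (S n) * t ^ (S n))) (Cnpow w (S n))))))).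
    { unfold PL, Sf, dSf. change (cs ?u (S (S n))) with (Cplus (cs u (S n)) (u (S n))).
      simpl pred. generalize (cs (fun j : nat => Cmult (RtoC (gb al j * t ^ j)) (Cnpow w j)) (S n)).
      generalize (cs (fun j : nat => Cmult (RtoC (gb al j * (INR j * t ^ Init.Nat.pred j))) (Cnpow w j)) (S n)).
      intros [a1 a2] [b1 b2]. unfold onetw. destruct (Cnpow w (S n)) as [p1 p2].
      apply injective_projections; simpl; ring. }
    rewrite E1, IHn. rewrite (gb_Sdef al (S n)).
    change (Cnpow w (S (S n))) with (Cmult w (Cnpow w (S n))).
    destruct (Cnpow w (S n)) as [p1 p2]. unfold onetw, w.
    pose proof (INR_S_pos n). pose proof (INR_S_pos (S n)).
    rewrite !S_INR in *.
    simpl pow. set (g := gb al (S n)) in *. set (m := INR n) in *. set (tn := t ^ n) in *. apply injective_projections; cbn [fst snd Cmult Cplus Copp Cminus RtoC]; field; lra.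
Qed.

Definition dH n t : C := Cplus (Cmult (dSf n t) (Ef t)) (Cmult (Sf n t) (dE t)).
Definition Hf n t : C := Cmult (Sf n t) (Ef t).

Lemma H_der n t : 0 < X t -> Cder (Hf n) t (dH n t).
Proof.
  intros HX. unfold Hf, dH. apply Cder_mult. apply Sf_der. apply Ef_der; auto.
Qed.

Lemma onetw_D t : 0 < X t -> Cmult (onetw t) (D1 t, D2 t) = w.
Proof.
  intros HX. pose proof (Qf_pos t HX). rewrite onetw_XY. unfold D1, D2, w.
  unfold Qf in *. apply injective_projections; simpl; field; lra.
Qed.

Lemma dH_id n t : 0 < X t -> Cmult (onetw t) (dH n t) = Cmult (PL n t) (Ef t).
Proof.
  intros HX. pose proof (onetw_D t HX) as E. unfold dH, dE, PL. rewrite <- E.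
  generalize (onetw t) (dSf n t) (Sf n t) (Ef t) (D1 t, D2 t).
  intros [a1 a2] [b1 b2] [c1 c2] [d1 d2] [e1 e2].
  apply injective_projections; simpl; ring.
Qed.

Lemma Cmod_Ef t : Cmod (Ef t) = exp (- al * L1 t).
Proof.
  unfold Ef, Cmod. simpl fst; simpl snd.
  set (e := exp (- al * L1 t)). set (a := al * L2 t).
  replace ((e * cos a) ^ 2 + (- (e * sin a)) ^ 2) with (e ^ 2 * (sin a ^ 2 + cos a ^ 2)) by ring.
  rewrite sin2_cos2' || idtac.
  replace (sin a ^ 2 + cos a ^ 2) with 1.
  rewrite Rmult_1_r. apply sqrt_pow2. unfold e; apply Rlt_le, exp_pos.
  rewrite <- (sin2_cos2 a). unfold Rsqr; ring.
Qed.


Hypothesis Hw : Cmod w < 1.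
Let m := 1 - Cmod w.
Definition Kw := exp (- al * ln m) / m.

Lemma m_pos : 0 < m.
Proof. unfold m; lra. Qed.

Lemma X_pos t : 0 <= t <= 1 -> 0 < X t.
Proof.
  intros Ht. pose proof (fst_le_Cmod w). simpl in H. unfold X.
  assert (Hw1 : Rabs w1 < 1) by lra.
  assert (- w1 <= Rabs w1) by (rewrite <- Rabs_Ropp; apply Rle_abs).
  assert (0 <= t * (Rabs w1 + w1)) by (apply Rmult_le_pos; lra).
  assert (0 <= (1 - t) * Rabs w1) by (apply Rmult_le_pos; [lra| apply Rabs_pos]).
  nra.
Qed.

Lemma Cmod_onetw t : Cmod (onetw t) = sqrt (Qf t).
Proof. rewrite onetw_XY. unfold Cmod, Qf. simpl. auto. Qed.

Lemma onetw_lower t : 0 <= t <= 1 -> m <= Cmod (onetw t).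
Proof.
  intros Ht. unfold m.
  assert (E : RtoC 1 = Cplus (onetw t) (Copp (Cmult (RtoC t) w))) by (unfold onetw; ring).
  pose proof (Cmod_triangle (onetw t) (Copp (Cmult (RtoC t) w))).
  rewrite <- E, Cmod_1, Cmod_opp, Cmod_tw in H.
  rewrite Rabs_right in H by lra. pose proof (Cmod_ge_0 w). nra.
Qed.

Lemma L1_eq t : 0 <= t <= 1 -> L1 t = ln (Cmod (onetw t)).
Proof.
  intros Ht. rewrite Cmod_onetw, ln_sqrt'. auto. apply Qf_pos, X_pos; auto.
Qed.

Lemma dH_bound n t : 0 <= t <= 1 -> Cmod (dH n t) <= Cmod w ^ S n * Kw.
Proof.
  intros Ht. pose proof (onetw_lower t Ht). pose proof m_pos.
  assert (Hc : 0 < Cmod (onetw t)) by lra.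
  assert (E : Cmod (dH n t) = Cmod (Cmult (PL n t) (Ef t)) / Cmod (onetw t)).
  { rewrite <- dH_id by (apply X_pos; auto). rewrite Cmod_mult. field. lra. }
  rewrite E, Cmod_mult, PL_id, Cmod_opp, Cmod_mult, Cmod_R, Cmod_Cnpow, Cmod_Ef.
  assert (B1 : Rabs (INR (S n) * gb al (S n) * t ^ n) <= 1).
  { rewrite !Rabs_mult. pose proof (gb_abs_S_le al Hal n). pose proof (INR_S_pos n).
    rewrite Rabs_right by lra. pose proof (pow_le1 t n Ht).
    rewrite (Rabs_right (t ^ n)) by lra.
    assert (INR (S n) * Rabs (gb al (S n)) <= 1).
    { apply Rmult_le_reg_r with (/ INR (S n)). apply Rinv_0_lt_compat; lra.
      rewrite Rmult_comm, <- Rmult_assoc, Rinv_l, Rmult_1_l, Rmult_1_l by lra. auto. }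
    pose proof (Rabs_pos (gb al (S n))). nra. }
  assert (B2 : exp (- al * L1 t) <= exp (- al * ln m)).
  { rewrite L1_eq by auto.
    destruct (Rle_lt_or_eq_dec _ _ H) as [h|h].
    apply Rlt_le, exp_increasing. apply Rmult_lt_compat_l' || idtac.
    assert (ln m < ln (Cmod (onetw t))) by (apply ln_increasing; auto). nra.
    rewrite h; lra. }
  unfold Kw. pose proof (exp_pos (- al * L1 t)). pose proof (exp_pos (- al * ln m)).
  pose proof (pow_le (Cmod w) (S n) (Cmod_ge_0 w)).
  pose proof (Rabs_pos (INR (S n) * gb al (S n) * t ^ n)).
  unfold Rdiv. 
  apply Rle_trans with (Cmod w ^ S n * exp (- al * ln m) * / Cmod (onetw t)).
  apply Rmult_le_compat_r. apply Rlt_le, Rinv_0_lt_compat; auto.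
  replace (Cmod w ^ S n * exp (- al * ln m)) with (1 * Cmod w ^ S n * exp (- al * ln m)) by ring.
  apply Rmult_le_compat; try nra.
  rewrite !Rmult_assoc. apply Rmult_le_compat_l; auto. apply Rmult_le_compat_l. lra.
  apply Rinv_le_contravar; auto.
Qed.

Lemma Sf_0 n : Sf n 0 = RtoC 1.
Proof.
  induction n. unfold Sf. simpl cs. simpl. apply injective_projections; simpl; ring.
  unfold Sf in *. change (cs ?u (S (S n))) with (Cplus (cs u (S n)) (u (S n))).
  rewrite IHn. simpl pow. rewrite Rmult_0_l, !Rmult_0_r. apply injective_projections; simpl; ring.
Qed.

Lemma Sf_1 n : Sf n 1 = Sser al n w.
Proof. unfold Sf, Sser. apply cs_ext. intros j _. rewrite pow1, Rmult_1_r. auto. Qed.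

Lemma Ef_0 : Ef 0 = RtoC 1.
Proof.
  unfold Ef, L1, L2, Qf, X, Y. rewrite !Rmult_0_l, Rplus_0_r.
  replace (1 ^ 2 + 0 ^ 2) with 1 by ring. replace (0 / 1) with 0 by field.
  rewrite ln_1, atan_0. replace (0 / 2) with 0 by field. rewrite !Rmult_0_r, exp_0, cos_0, sin_0.
  apply injective_projections; simpl; ring.
Qed.

Definition Gw := Defs.Cpow (Cplus (RtoC 1) w) al.

Lemma Ef_G : Cmult (Ef 1) Gw = RtoC 1.
Proof.
  assert (E : Cplus (RtoC 1) w = onetw 1) by (unfold onetw; ring).
  assert (H1 : 0 < X 1) by (apply X_pos; lra).
  assert (Hc : 0 < Cmod (onetw 1)) by (pose proof (onetw_lower 1 ltac:(lra)); pose proof m_pos; lra).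
  unfold Gw. rewrite E, Cpow_eq by lra. rewrite Arg_pos by (rewrite onetw_XY; simpl; auto).
  rewrite <- L1_eq by lra. rewrite onetw_XY. simpl fst; simpl snd. fold (L2 1).
  unfold Ef.
  set (a := L1 1). set (b := L2 1).
  assert (exp (- al * a) * exp (al * a) = 1) by (rewrite <- exp_plus; replace (- al * a + al * a) with 0 by ring; apply exp_0).
  pose proof (sin2_cos2 (al * b)). unfold Rsqr in H0.
  apply injective_projections; simpl.
  - replace (exp (- al * a) * cos (al * b) * (exp (al * a) * cos (al * b)) -
      - (exp (- al * a) * sin (al * b)) * (exp (al * a) * sin (al * b))) with
      ((exp (- al * a) * exp (al * a)) * (sin (al * b) * sin (al * b) + cos (al * b) * cos (al * b))) by ring.
    rewrite H, H0; ring.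
  - replace (exp (- al * a) * cos (al * b) * (exp (al * a) * sin (al * b)) +
      - (exp (- al * a) * sin (al * b)) * (exp (al * a) * cos (al * b))) with 0 by ring. auto.
Qed.

Lemma Sser_G n : Cmod (Cminus (Sser al n w) Gw) <= 2 * (Cmod w ^ S n * Kw) * Cmod Gw.
Proof.
  assert (E : Cminus (Sser al n w) Gw = Cmult (Cminus (Hf n 1) (Hf n 0)) Gw).
  { unfold Hf. rewrite Sf_0, Ef_0, Sf_1.
    transitivity (Cminus (Cmult (Sser al n w) (Cmult (Ef 1) Gw)) Gw).
    rewrite Ef_G. ring. ring. }
  rewrite E, Cmod_mult. apply Rmult_le_compat_r. apply Cmod_ge_0.
  apply mvt_bound with (dh := dH n). intros; apply H_der, X_pos; auto.
  intros; apply dH_bound; auto.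
Qed.

End ODE.


Lemma ballC_intro (x y : C) e : Rabs (fst y - fst x) < e -> Rabs (snd y - snd x) < e ->
  ball (M:=C_R_CompleteNormedModule) x e y.
Proof. intros H1 H2. split; [change (Rabs (fst y - fst x) < e)|change (Rabs (snd y - snd x) < e)]; auto. Qed.

Lemma ballC_elim (x y : C) e : ball (M:=C_R_CompleteNormedModule) x e y ->
  Rabs (fst y - fst x) < e /\ Rabs (snd y - snd x) < e.
Proof. intros [H1 H2]. split; [change (Rabs (fst y - fst x) < e) in H1|change (Rabs (snd y - snd x) < e) in H2]; auto. Qed.

Lemma ballC_Cmod (x y : C) e : Cmod (Cminus y x) < e -> ball (M:=C_R_CompleteNormedModule) x e y.
Proof.
  intros H. pose proof (fst_le_Cmod (Cminus y x)). pose proof (snd_le_Cmod (Cminus y x)).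
  simpl in *. apply ballC_intro; unfold Rminus; lra.
Qed.

Lemma Cmod_ballC (x y : C) e : ball (M:=C_R_CompleteNormedModule) x e y -> Cmod (Cminus y x) < 2 * e.
Proof.
  intros H. apply ballC_elim in H. pose proof (Cmod_le_sum (Cminus y x)). simpl in *.
  unfold Rminus in *. lra.
Qed.

Section Ser.
Variable al : R.
Hypothesis Hal : 0 < al < 1.

Lemma Sser_S n u : Sser al (S n) u = Cplus (Sser al n u) (Cmult (RtoC (gb al (S n))) (Cnpow u (S n))).
Proof. reflexivity. Qed.

Lemma Sser_tail n k u : Cmod u <= 1 ->
  Cmod (Cminus (Sser al (n + k) u) (Sser al n u)) <= Ap al n - Ap al (n + k).
Proof.
  intros Hu. induction k.
  - rewrite Nat.add_0_r. replace (Cminus (Sser al n u) (Sser al n u)) with (RtoC 0) by ring.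
    rewrite Cmod_0. lra.
  - rewrite Nat.add_succ_r, Sser_S.
    replace (Cminus (Cplus (Sser al (n + k) u) (Cmult (RtoC (gb al (S (n + k)))) (Cnpow u (S (n + k))))) (Sser al n u))
      with (Cplus (Cminus (Sser al (n + k) u) (Sser al n u)) (Cmult (RtoC (gb al (S (n + k)))) (Cnpow u (S (n + k))))) by ring.
    eapply Rle_trans. apply Cmod_triangle.
    rewrite Cmod_mult, Cmod_R, Cmod_Cnpow, gb_abs_S by auto.
    pose proof (pow_le1 (Cmod u) (S (n + k)) (conj (Cmod_ge_0 u) Hu)).
    pose proof (Ap_pos al Hal (n + k)). pose proof (Ap_decr al Hal (n + k)).
    assert ((Ap al (n + k) - Ap al (S (n + k))) * Cmod u ^ S (n + k) <= Ap al (n + k) - Ap al (S (n + k))) by nra.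
    lra.
Qed.

Lemma Sser_0 u : Sser al 0 u = RtoC 1.
Proof. unfold Sser. simpl. apply injective_projections; simpl; ring. Qed.

Lemma Sser_bound n u : Cmod u <= 1 -> Cmod (Sser al n u) <= 2.
Proof.
  intros Hu. pose proof (Sser_tail 0 n u Hu). simpl plus in H. rewrite Sser_0 in *.
  replace (Sser al n u) with (Cplus (Cminus (Sser al n u) (RtoC 1)) (RtoC 1)) by ring.
  eapply Rle_trans. apply Cmod_triangle. rewrite Cmod_1.
  pose proof (Ap_pos al Hal n). simpl in H. lra.
Qed.

Lemma G_Sser w n : Cmod w < 1 ->
  Cmod (Cminus (Defs.Cpow (Cplus (RtoC 1) w) al) (Sser al n w)) <= Ap al n.
Proof.
  intros Hw. destruct w as [w1 w2].
  apply Rle_plus_epsilon. intros e He.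
  set (G := Defs.Cpow (Cplus (RtoC 1) (w1, w2)) al).
  set (K := 2 * Kw al w1 w2 * Cmod G + 1).
  assert (HK : 0 < K).
  { unfold K, Kw. pose proof (Cmod_ge_0 G). pose proof (Cmod_ge_0 (w1, w2)).
    assert (0 < 1 - Cmod (w1, w2)) by lra.
    assert (0 < exp (- al * ln (1 - Cmod (w1, w2))) / (1 - Cmod (w1, w2)))
      by (apply Rdiv_lt_0_compat; auto; apply exp_pos). nra. }
  destruct (pow_lt_1_zero (Cmod (w1, w2))) with (y := e / K) as [N HN].
  rewrite Rabs_right; auto. apply Rle_ge, Cmod_ge_0.
  apply Rdiv_lt_0_compat; auto.
  set (k := (N + 0)%nat).
  pose proof (Sser_G al w1 w2 Hal Hw (n + N)).
  pose proof (HN (S (n + N)) ltac:(lia)).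
  rewrite Rabs_right in H0 by (apply Rle_ge, pow_le, Cmod_ge_0).
  pose proof (Sser_tail n N (w1, w2) (Rlt_le _ _ Hw)).
  fold G in H. unfold Gw in H. fold G in H.
  replace (Cminus G (Sser al n (w1, w2))) with
    (Cplus (Copp (Cminus (Sser al (n + N) (w1, w2)) G)) (Cminus (Sser al (n + N) (w1, w2)) (Sser al n (w1, w2)))) by ring.
  eapply Rle_trans. apply Cmod_triangle. rewrite Cmod_opp.
  pose proof (Ap_pos al Hal (n + N)).
  assert (2 * (Cmod (w1, w2) ^ S (n + N) * Kw al w1 w2) * Cmod G <= e).
  { assert (Cmod (w1, w2) ^ S (n + N) * K <= e).
    { apply Rmult_lt_compat_r with (r := K) in H0; auto.
      unfold Rdiv in H0. rewrite Rmult_assoc, Rinv_l, Rmult_1_r in H0 by lra. lra. }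
    unfold K in H3. pose proof (pow_le (Cmod (w1, w2)) (S (n + N)) (Cmod_ge_0 _)). nra. }
  lra.
Qed.

Lemma G_bound w : Cmod w < 1 -> Cmod (Defs.Cpow (Cplus (RtoC 1) w) al) <= 2.
Proof.
  intros Hw. pose proof (G_Sser w 0 Hw). rewrite Sser_0 in H. simpl Ap in H.
  replace (Defs.Cpow (Cplus (RtoC 1) w) al) with
    (Cplus (Cminus (Defs.Cpow (Cplus (RtoC 1) w) al) (RtoC 1)) (RtoC 1)) by ring.
  eapply Rle_trans. apply Cmod_triangle. rewrite Cmod_1. lra.
Qed.

End Ser.


Definition u1 t : C := Copp (Cexpi t).
Definition u2 t : C := Cexpi (- t).
Definition Pn al n t : C := Cmult (Sser al n (u1 t)) (Sser al n (u2 t)).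

Lemma Cmod_Cexpi t : Cmod (Cexpi t) = 1.
Proof.
  unfold Cmod, Cexpi. simpl fst; simpl snd. rewrite <- sqrt_1. f_equal.
  pose proof (sin2_cos2 t). unfold Rsqr in H. rewrite <- H. ring.
Qed.

Lemma Cmod_u1 t : Cmod (u1 t) = 1.
Proof. unfold u1. rewrite Cmod_opp. apply Cmod_Cexpi. Qed.
Lemma Cmod_u2 t : Cmod (u2 t) = 1.
Proof. apply Cmod_Cexpi. Qed.

Lemma Cnpow_scal r u j : Cnpow (Cmult (RtoC r) u) j = Cmult (RtoC (r ^ j)) (Cnpow u j).
Proof.
  induction j. simpl. apply injective_projections; simpl; ring.
  simpl Cnpow. rewrite IHj. destruct u as [a b]. destruct (Cnpow (a, b) j) as [c d].
  apply injective_projections; simpl; ring.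
Qed.

Lemma bern r k : 0 <= r <= 1 -> 1 - r ^ k <= INR k * (1 - r).
Proof.
  intros H. induction k. simpl. lra.
  rewrite S_INR. simpl pow. pose proof (pow_le1 r k H). nra.
Qed.

Lemma nat_above x : exists n : nat, x < INR n.
Proof.
  destruct (archimed (Rabs x)) as [H1 _].
  pose proof (Rabs_pos x). pose proof (Rle_abs x).
  assert (Hz : (0 < up (Rabs x))%Z) by (apply lt_IZR; simpl; lra).
  exists (Z.to_nat (up (Rabs x))). rewrite INR_IZR_INZ, Z2Nat.id by lia. lra.
Qed.

Section Phi.
Variable al : R.
Hypothesis Hal : 0 < al < 1.

Lemma Sser_R n u r : Cmod u <= 1 -> 0 <= r <= 1 ->
  Cmod (Cminus (Sser al n (Cmult (RtoC r) u)) (Sser al n u)) <= INR n * INR (S n) * (1 - r).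
Proof.
  intros Hu Hr. induction n.
  - rewrite !Sser_0. replace (Cminus (RtoC 1) (RtoC 1)) with (RtoC 0) by ring. rewrite Cmod_0. simpl; lra.
  - rewrite !Sser_S, Cnpow_scal.
    replace (Cminus (Cplus (Sser al n (Cmult (RtoC r) u)) (Cmult (RtoC (gb al (S n))) (Cmult (RtoC (r ^ S n)) (Cnpow u (S n)))))
      (Cplus (Sser al n u) (Cmult (RtoC (gb al (S n))) (Cnpow u (S n)))))
    with (Cplus (Cminus (Sser al n (Cmult (RtoC r) u)) (Sser al n u))
       (Cmult (RtoC (gb al (S n) * (r ^ S n - 1))) (Cnpow u (S n)))).
    2:{ destruct (Cnpow u (S n)) as [a b]. apply injective_projections; simpl; ring. }
    eapply Rle_trans. apply Cmod_triangle.
    rewrite Cmod_mult, Cmod_R, Cmod_Cnpow, Rabs_mult.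
    pose proof (gb_abs_le1 al Hal (S n)).
    pose proof (pow_le1 (Cmod u) (S n) (conj (Cmod_ge_0 u) Hu)).
    pose proof (pow_le1 r (S n) Hr). pose proof (bern r (S n) Hr).
    rewrite (Rabs_left1 (r ^ S n - 1)) by lra.
    assert (Rabs (gb al (S n)) * - (r ^ S n - 1) * Cmod u ^ S n <= INR (S n) * (1 - r)).
    { pose proof (Rabs_pos (gb al (S n))). 
      apply Rle_trans with (1 * - (r ^ S n - 1) * 1). 
      apply Rmult_le_compat; [apply Rmult_le_pos; [apply Rabs_pos|lra]|lra| apply Rmult_le_compat_r; lra| lra]. lra. }
    rewrite !S_INR in *. pose proof (pos_INR n). nra.
Qed.

Lemma phiR_eq r t : phiR al r t =
  Cmult (Defs.Cpow (Cplus (RtoC 1) (Cmult (RtoC r) (u1 t))) al)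
        (Defs.Cpow (Cplus (RtoC 1) (Cmult (RtoC r) (u2 t))) al).
Proof.
  unfold phiR, u1, u2. f_equal. f_equal. ring.
Qed.

Lemma phiR_Pn n r t : 0 <= r < 1 ->
  Cmod (Cminus (phiR al r t) (Pn al n t)) <= 4 * Ap al n + 4 * (INR n * INR (S n) * (1 - r)).
Proof.
  intros Hr. rewrite phiR_eq. unfold Pn.
  assert (Hv1 : Cmod (Cmult (RtoC r) (u1 t)) < 1) by (rewrite Cmod_mult, Cmod_R, Cmod_u1, Rabs_right; lra).
  assert (Hv2 : Cmod (Cmult (RtoC r) (u2 t)) < 1) by (rewrite Cmod_mult, Cmod_R, Cmod_u2, Rabs_right; lra).
  set (v1 := Cmult (RtoC r) (u1 t)) in *. set (v2 := Cmult (RtoC r) (u2 t)) in *.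
  set (G1 := Defs.Cpow (Cplus (RtoC 1) v1) al). set (G2 := Defs.Cpow (Cplus (RtoC 1) v2) al).
  pose proof (G_Sser al Hal v1 n Hv1) as A1. pose proof (G_Sser al Hal v2 n Hv2) as A2.
  pose proof (G_bound al Hal v2 Hv2) as B2. fold G1 G2 in A1, A2, B2.
  pose proof (Sser_bound al Hal n v1 (Rlt_le _ _ Hv1)) as C1.
  pose proof (Sser_bound al Hal n (u1 t) (Req_le _ _ (Cmod_u1 t))) as C1'.
  pose proof (Sser_bound al Hal n v2 (Rlt_le _ _ Hv2)) as C2.
  pose proof (Sser_R n (u1 t) r (Req_le _ _ (Cmod_u1 t)) (conj (proj1 Hr) (Rlt_le _ _ (proj2 Hr)))) as D1.
  pose proof (Sser_R n (u2 t) r (Req_le _ _ (Cmod_u2 t)) (conj (proj1 Hr) (Rlt_le _ _ (proj2 Hr)))) as D2.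
  fold v1 v2 in D1, D2.
  set (S1 := Sser al n v1) in *. set (S2 := Sser al n v2) in *.
  set (T1 := Sser al n (u1 t)) in *. set (T2 := Sser al n (u2 t)) in *.
  replace (Cminus (Cmult G1 G2) (Cmult T1 T2)) with
    (Cplus (Cplus (Cmult (Cminus G1 S1) G2) (Cmult S1 (Cminus G2 S2)))
           (Cplus (Cmult (Cminus S1 T1) S2) (Cmult T1 (Cminus S2 T2)))) by ring.
  set (d := INR n * INR (S n) * (1 - r)) in *.
  pose proof (Cmod_ge_0 (Cminus G1 S1)). pose proof (Cmod_ge_0 (Cminus G2 S2)).
  pose proof (Cmod_ge_0 (Cminus S1 T1)). pose proof (Cmod_ge_0 (Cminus S2 T2)).
  pose proof (Cmod_ge_0 G2). pose proof (Cmod_ge_0 S1). pose proof (Cmod_ge_0 S2). pose proof (Cmod_ge_0 T1).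
  eapply Rle_trans. apply Cmod_triangle.
  eapply Rle_trans. apply Rplus_le_compat; apply Cmod_triangle.
  rewrite !Cmod_mult.
  assert (Cmod (Cminus G1 S1) * Cmod G2 <= Ap al n * 2) by (apply Rmult_le_compat; auto).
  assert (Cmod S1 * Cmod (Cminus G2 S2) <= 2 * Ap al n) by (apply Rmult_le_compat; auto).
  assert (Cmod (Cminus S1 T1) * Cmod S2 <= d * 2) by (apply Rmult_le_compat; auto).
  assert (Cmod T1 * Cmod (Cminus S2 T2) <= 2 * d) by (apply Rmult_le_compat; auto).
  lra.
Qed.


Lemma Ap_mono n k : Ap al (n + k) <= Ap al n.
Proof.
  induction k. rewrite Nat.add_0_r; lra.
  rewrite Nat.add_succ_r. eapply Rle_trans. apply Ap_decr; auto. auto.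
Qed.

Lemma Ap_small e : 0 < e -> exists n, Ap al n < e.
Proof.
  intros He. destruct (nat_above (exp (- ln e / al))) as [n Hn].
  exists n. eapply Rle_lt_trans. apply Ap_bound; auto.
  unfold Rpower. rewrite <- (exp_ln e) by auto.
  apply exp_increasing.
  assert (0 < exp (- ln e / al)) by apply exp_pos.
  assert (- ln e / al < ln (INR n + 1)).
  { rewrite <- (ln_exp (- ln e / al)) at 1. apply ln_increasing; auto. lra. }
  apply Rmult_lt_compat_l with (r := al) in H0; [|lra].
  replace (al * (- ln e / al)) with (- ln e) in H0 by (field; lra). lra.
Qed.

Lemma phi_Pn n t : Cmod (Cminus (phi al t) (Pn al n t)) <= 4 * Ap al n.
Proof.
  set (F := filtermap (fun r => phiR al r t) (at_left 1)).
  assert (PF : ProperFilter F) by (apply filtermap_proper_filter, at_left_proper_filter).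
  assert (CF : cauchy (T := C_R_CompleteNormedModule) F).
  { intros eps. destruct (Ap_small (eps / 8)) as [k Hk]. destruct eps as [eps Heps]; simpl; lra.
    exists (Pn al k t).
    set (K := 4 * (INR k * INR (S k)) + 1).
    assert (HK : 0 < K). { unfold K. pose proof (pos_INR k). pose proof (INR_S_pos k). nra. }
    assert (Hd : 0 < Rmin (1/2) (eps / (2 * K))).
    { apply Rmin_pos. lra. apply Rdiv_lt_0_compat. apply cond_pos. lra. }
    exists (mkposreal _ Hd). intros y Hy Hy1.
    change (Rabs (y - 1) < Rmin (1/2) (eps / (2 * K))) in Hy.
    pose proof (Rmin_l (1/2) (eps / (2 * K))). pose proof (Rmin_r (1/2) (eps / (2 * K))).
    assert (Hy0 : 0 <= y < 1). { unfold Rabs in Hy; destruct Rcase_abs; lra. }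
    apply ballC_Cmod. eapply Rle_lt_trans. apply phiR_Pn; auto.
    assert (1 - y < eps / (2 * K)). { unfold Rabs in Hy; destruct Rcase_abs; lra. }
    assert (4 * (INR k * INR (S k)) * (1 - y) <= eps / 2).
    { apply Rle_trans with (K * (1 - y)). unfold K. nra.
      apply Rmult_lt_compat_l with (r := K) in H1; auto.
      replace (K * (eps / (2 * K))) with (eps / 2) in H1 by (field; lra). lra. }
    assert (0 < eps) by apply cond_pos. nra. }
  apply Rle_plus_epsilon. intros e He.
  assert (He4 : 0 < e / 4) by lra.
  pose proof (@complete_cauchy C_R_CompleteNormedModule F PF CF (mkposreal _ He4)) as HL.
  destruct HL as [d Hd].
  set (K := 4 * (INR n * INR (S n)) + 1).
  assert (HK : 0 < K). { unfold K. pose proof (pos_INR n). pose proof (INR_S_pos n). nra. }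
  set (eta := Rmin (Rmin (1/2) (e / (2 * K))) (d / 2)).
  assert (Heta : 0 < eta).
  { apply Rmin_pos. apply Rmin_pos. lra. apply Rdiv_lt_0_compat; lra. pose proof (cond_pos d). lra. }
  assert (E1 : eta <= 1/2) by (unfold eta; eapply Rle_trans; [apply Rmin_l|apply Rmin_l]).
  assert (E2 : eta <= e / (2 * K)) by (unfold eta; eapply Rle_trans; [apply Rmin_l|apply Rmin_r]).
  assert (E3 : eta <= d / 2) by (unfold eta; apply Rmin_r).
  assert (By : ball 1 d (1 - eta)).
  { change (Rabs (1 - eta - 1) < d). rewrite Rabs_left by lra. pose proof (cond_pos d). lra. }
  specialize (Hd (1 - eta) By ltac:(lra)).
  simpl in Hd. apply Cmod_ballC in Hd.
  change (phi al t) with (@lim C_R_CompleteNormedModule F).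
  pose proof (phiR_Pn n (1 - eta) t ltac:(lra)).
  set (LF := @lim C_R_CompleteNormedModule F) in *.
  replace (Cminus LF (Pn al n t)) with
    (Cplus (Copp (Cminus (phiR al (1 - eta) t) LF)) (Cminus (phiR al (1 - eta) t) (Pn al n t))) by ring.
  eapply Rle_trans. apply Cmod_triangle. rewrite Cmod_opp.
  assert (4 * (INR n * INR (S n)) * (1 - (1 - eta)) <= e / 2).
  { replace (1 - (1 - eta)) with eta by ring.
    apply Rle_trans with (K * eta). unfold K. nra.
    apply Rmult_le_compat_l with (r := K) in E2; [|lra].
    replace (K * (e / (2 * K))) with (e / 2) in E2 by (field; lra). lra. }
  lra.
Qed.

End Phi.


Lemma sin_nat_PI k : sin (INR k * PI) = 0.
Proof.
  induction k. simpl. rewrite Rmult_0_l. apply sin_0.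
  rewrite S_INR, Rmult_plus_distr_r, Rmult_1_l, neg_sin, IHk. ring.
Qed.

Lemma sin_Z_PI z : sin (IZR z * PI) = 0.
Proof.
  destruct z.
  - simpl. rewrite Rmult_0_l. apply sin_0.
  - rewrite <- positive_nat_Z, <- INR_IZR_INZ. apply sin_nat_PI.
  - rewrite <- Pos2Z.opp_pos, opp_IZR, <- positive_nat_Z, <- INR_IZR_INZ.
    rewrite Ropp_mult_distr_l_reverse, sin_neg, sin_nat_PI. ring.
Qed.

Lemma is_RInt_cos_Z (c : R) (z : Z) : is_RInt (fun x => c * cos (IZR z * x)) (- PI) PI
   (if (z =? 0)%Z then 2 * PI * c else 0).
Proof.
  destruct (Z.eqb_spec z 0) as [Hz|Hz].
  - subst. apply (is_RInt_ext (fun _ => c)). intros x _. cbv beta. rewrite Rmult_0_l, cos_0, Rmult_1_r. reflexivity.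
    replace (2 * PI * c) with ((PI - - PI) * c) by ring. exact (is_RInt_const (V := R_NormedModule) (- PI) PI c).
  - assert (Hz' : IZR z <> 0) by (intro h; apply Hz; apply eq_IZR; auto).
    assert (HV : c * sin (IZR z * PI) / IZR z - c * sin (IZR z * - PI) / IZR z = 0).
    { rewrite <- Ropp_mult_distr_r, sin_neg, sin_Z_PI. field; auto. }
    assert (HI : is_RInt (fun x => c * cos (IZR z * x)) (- PI) PI
       (minus (c * sin (IZR z * PI) / IZR z) (c * sin (IZR z * - PI) / IZR z))).
    { apply (is_RInt_derive (V := R_CompleteNormedModule) (fun x => c * sin (IZR z * x) / IZR z)).
      + intros x _. auto_derive; auto. field; auto.
      + intros x _. apply (ex_derive_continuous (fun x0 => c * cos (IZR z * x0))). auto_derive; auto. }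
    change (minus (c * sin (IZR z * PI) / IZR z) (c * sin (IZR z * - PI) / IZR z))
        with (c * sin (IZR z * PI) / IZR z - c * sin (IZR z * - PI) / IZR z) in HI.
    rewrite HV in HI. exact HI.
Qed.

Lemma is_RInt_sin_Z (c : R) (z : Z) : is_RInt (fun x => c * sin (IZR z * x)) (- PI) PI 0.
Proof.
  destruct (Z.eqb_spec z 0) as [Hz|Hz].
  - subst. apply (is_RInt_ext (fun _ => 0)). intros x _. cbv beta. rewrite Rmult_0_l, sin_0, Rmult_0_r. reflexivity.
    pose proof (is_RInt_const (V := R_NormedModule) (- PI) PI 0) as HI.
    change (scal (PI - - PI) 0) with ((PI - - PI) * 0) in HI. rewrite Rmult_0_r in HI. exact HI.
  - assert (Hz' : IZR z <> 0) by (intro h; apply Hz; apply eq_IZR; auto).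
    assert (HV : - c * cos (IZR z * PI) / IZR z - - c * cos (IZR z * - PI) / IZR z = 0).
    { rewrite <- Ropp_mult_distr_r, cos_neg. field; auto. }
    assert (HI : is_RInt (fun x => c * sin (IZR z * x)) (- PI) PI
       (minus (- c * cos (IZR z * PI) / IZR z) (- c * cos (IZR z * - PI) / IZR z))).
    { apply (is_RInt_derive (V := R_CompleteNormedModule) (fun x => - c * cos (IZR z * x) / IZR z)).
      + intros x _. auto_derive; auto. field; auto.
      + intros x _. apply (ex_derive_continuous (fun x0 => c * sin (IZR z * x0))). auto_derive; auto. }
    change (minus (- c * cos (IZR z * PI) / IZR z) (- c * cos (IZR z * - PI) / IZR z))
        with (- c * cos (IZR z * PI) / IZR z - - c * cos (IZR z * - PI) / IZR z) in HI.
    rewrite HV in HI. exact HI.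
Qed.

Lemma is_RInt_mono (c : R) (z : Z) :
  is_RInt (fun x => Cmult (RtoC c) (Cexpi (IZR z * x))) (- PI) PI
    (RtoC (if (z =? 0)%Z then 2 * PI * c else 0)).
Proof.
  apply is_RInt_fct_extend_pair.
  - eapply is_RInt_ext; [|apply (is_RInt_cos_Z c z)]. intros x _. simpl. ring.
  - eapply is_RInt_ext; [|apply (is_RInt_sin_Z c z)]. intros x _. simpl. ring.
Qed.

Lemma is_RInt_cs (u : nat -> R -> C) (I : nat -> C) a b n :
  (forall j, (j < n)%nat -> is_RInt (u j) a b (I j)) ->
  is_RInt (fun x => cs (fun j => u j x) n) a b (cs I n).
Proof.
  induction n; intros H; simpl.
  - pose proof (is_RInt_const (V := C_R_NormedModule) a b (RtoC 0)) as HI.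
    match type of HI with is_RInt _ _ _ ?v => replace v with (RtoC 0) in HI end. exact HI.
    apply injective_projections; simpl; symmetry; apply Rmult_0_r.
  - apply (is_RInt_plus (fun x => cs (fun j => u j x) n) (u n)).
    apply IHn; intros; apply H; lia. apply H; lia.
Qed.

Lemma cs_RtoC r n : cs (fun j => RtoC (r j)) n = RtoC (rs r n).
Proof.
  induction n; simpl; auto. rewrite IHn. apply injective_projections; simpl; ring.
Qed.

Lemma Cexpi_add a b : Cmult (Cexpi a) (Cexpi b) = Cexpi (a + b).
Proof.
  unfold Cexpi. rewrite cos_plus, sin_plus. apply injective_projections; simpl; ring.
Qed.

Lemma Cnpow_u1 t m : Cnpow (u1 t) m = Cmult (RtoC ((-1) ^ m)) (Cexpi (INR m * t)).
Proof.
  induction m.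
  - simpl. rewrite Rmult_0_l. unfold Cexpi. rewrite cos_0, sin_0. apply injective_projections; simpl; ring.
  - simpl Cnpow. rewrite IHm. unfold u1. rewrite S_INR.
    replace ((INR m + 1) * t) with (t + INR m * t) by ring. rewrite <- Cexpi_add.
    simpl pow. destruct (Cexpi t) as [p q]. destruct (Cexpi (INR m * t)) as [r s].
    apply injective_projections; simpl; ring.
Qed.

Lemma Cnpow_u2 t j : Cnpow (u2 t) j = Cexpi (- (INR j * t)).
Proof.
  induction j.
  - simpl. rewrite Rmult_0_l, Ropp_0. unfold Cexpi. rewrite cos_0, sin_0. reflexivity.
  - simpl Cnpow. rewrite IHj. unfold u2. rewrite Cexpi_add. f_equal. rewrite S_INR. ring.
Qed.

Lemma cs_mult_l c u n : Cmult c (cs u n) = cs (fun j => Cmult c (u j)) n.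
Proof. induction n; simpl. ring. rewrite <- IHn. ring. Qed.
Lemma cs_mult_r c u n : Cmult (cs u n) c = cs (fun j => Cmult (u j) c) n.
Proof. induction n; simpl. ring. rewrite <- IHn. ring. Qed.


Definition bt al n j := if (j <=? n)%nat then gb al j else 0.
Definition Qn al n l := rs (fun m => gb al m * (-1) ^ m * bt al n (m + l)) (S n).

Lemma IZR_mjl m j l : IZR (Z.of_nat m - Z.of_nat j + Z.of_nat l) = INR m - INR j + INR l.
Proof. rewrite plus_IZR, minus_IZR, <- !INR_IZR_INZ. auto. Qed.

Lemma IZR_0l l : IZR (Z.of_nat 0 - Z.of_nat l) = - INR l.
Proof. rewrite minus_IZR, <- !INR_IZR_INZ. simpl. ring. Qed.

Section F.
Variable al : R.
Hypothesis Hal : 0 < al < 1.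

Lemma integrand_expand n l t :
  Cmult (Pn al n t) (Cexpi (- (IZR (Z.of_nat 0 - Z.of_nat l) * t))) =
  cs (fun m => cs (fun j => Cmult (RtoC (gb al m * (-1) ^ m * gb al j))
        (Cexpi (IZR (Z.of_nat m - Z.of_nat j + Z.of_nat l) * t))) (S n)) (S n).
Proof.
  unfold Pn, Sser. rewrite cs_mult_r, cs_mult_r. apply cs_ext. intros m _.
  rewrite cs_mult_l, cs_mult_r. apply cs_ext. intros j _.
  rewrite Cnpow_u1, Cnpow_u2, IZR_mjl, IZR_0l.
  replace ((INR m - INR j + INR l) * t) with (INR m * t + (- (INR j * t) + - (- INR l * t))) by ring.
  rewrite <- !Cexpi_add.
  destruct (Cexpi (INR m * t)) as [a b]. destruct (Cexpi (- (INR j * t))) as [c d].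
  destruct (Cexpi (- (- INR l * t))) as [e f].
  apply injective_projections; simpl; ring.
Qed.

Lemma Zcond m j l : (Z.of_nat m - Z.of_nat j + Z.of_nat l =? 0)%Z = (j =? m + l)%nat.
Proof.
  destruct (Z.eqb_spec (Z.of_nat m - Z.of_nat j + Z.of_nat l) 0); destruct (Nat.eqb_spec j (m + l)); auto; lia.
Qed.

Lemma rs_delta (A : R) m l k :
  rs (fun j => if (Z.of_nat m - Z.of_nat j + Z.of_nat l =? 0)%Z then 2 * PI * (A * gb al j) else 0) k
  = if (m + l <? k)%nat then 2 * PI * (A * gb al (m + l)) else 0.
Proof.
  induction k; simpl rs.
  - destruct (m + l <? 0)%nat eqn:E; auto. apply Nat.ltb_lt in E; lia.
  - rewrite IHk, Zcond.
    destruct (Nat.ltb_spec (m + l) k); destruct (Nat.eqb_spec k (m + l));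
    destruct (Nat.ltb_spec (m + l) (S k)); try lia; subst; ring.
Qed.

Lemma is_RInt_Pn n l : is_RInt (fun t => Cmult (Pn al n t) (Cexpi (- (IZR (Z.of_nat 0 - Z.of_nat l) * t))))
  (- PI) PI (RtoC (2 * PI * Qn al n l)).
Proof.
  eapply is_RInt_ext. intros x _. symmetry. apply integrand_expand.
  evar (I : nat -> C).
  replace (RtoC (2 * PI * Qn al n l)) with (cs I (S n)).
  apply (is_RInt_cs (fun m t => cs (fun j => Cmult (RtoC (gb al m * (-1) ^ m * gb al j))
        (Cexpi (IZR (Z.of_nat m - Z.of_nat j + Z.of_nat l) * t))) (S n))).
  intros m _. unfold I.
  apply (is_RInt_cs (fun j t => Cmult (RtoC (gb al m * (-1) ^ m * gb al j))
        (Cexpi (IZR (Z.of_nat m - Z.of_nat j + Z.of_nat l) * t)))).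
  intros j _. apply is_RInt_mono.
  unfold I. unfold Qn.
  transitivity (RtoC (rs (fun m => rs (fun j => if (Z.of_nat m - Z.of_nat j + Z.of_nat l =? 0)%Z
       then 2 * PI * (gb al m * (-1) ^ m * gb al j) else 0) (S n)) (S n))).
  { rewrite <- cs_RtoC. apply cs_ext. intros m _. rewrite <- cs_RtoC. apply cs_ext. intros j _.
    destruct (_ =? _)%Z; reflexivity. }
  f_equal. rewrite <- rs_scal. apply rs_ext. intros m _.
  rewrite rs_delta. unfold bt.
  destruct (Nat.ltb_spec (m + l) (S n)); destruct (Nat.leb_spec (m + l) n); try lia; ring.
Qed.

Lemma fourier_lim l e : 0 < e -> exists N, forall n, (N <= n)%nat ->
  Cmod (Cminus (toeplitz (phi al) 0 l) (RtoC (Qn al n l))) < e.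
Proof.
  intros He.
  set (s := (Z.of_nat 0 - Z.of_nat l)%Z).
  set (g := fun t => Cmult (phi al t) (Cexpi (- (IZR s * t)))).
  set (f := fun n t => Cmult (Pn al n t) (Cexpi (- (IZR s * t)))).
  destruct (filterlim_RInt (V := C_R_CompleteNormedModule) f (- PI) PI eventually eventually_filter
     g (fun n => RtoC (2 * PI * Qn al n l))) as [If [Hlim HI]].
  - intros n. apply is_RInt_Pn.
  - intros P [eps HP]. destruct (Ap_small al Hal (eps / 8)) as [N HN].
    destruct eps as [eps Heps]; simpl; lra.
    exists N. intros n Hn. apply HP. intros t.
    apply ballC_Cmod. unfold f, g.
    replace (Cminus (Cmult (Pn al n t) (Cexpi (- (IZR s * t)))) (Cmult (phi al t) (Cexpi (- (IZR s * t)))))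
      with (Cmult (Copp (Cminus (phi al t) (Pn al n t))) (Cexpi (- (IZR s * t)))) by ring.
    rewrite Cmod_mult, Cmod_Cexpi, Cmod_opp, Rmult_1_r.
    eapply Rle_lt_trans. apply phi_Pn; auto.
    replace n with (N + (n - N))%nat by lia. pose proof (Ap_mono al Hal N (n - N)).
    simpl. destruct eps; simpl in *. lra.
  - assert (HPI : 0 < PI) by apply PI_RGT_0.
    assert (He' : 0 < PI * e) by nra.
    destruct (Hlim (ball (M := C_R_CompleteNormedModule) If (PI * e))) as [N HN].
    { exists (mkposreal _ He'). auto. }
    exists N. intros n Hn. specialize (HN n Hn). apply Cmod_ballC in HN.
    unfold toeplitz, fourier. fold s.
    assert (HR : RInt (V := C_R_CompleteNormedModule) g (- PI) PI = If) by (apply is_RInt_unique; auto).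
    unfold g in HR. rewrite HR.
    replace (Cminus (Cmult (RtoC (/ (2 * PI))) If) (RtoC (Qn al n l))) with
      (Cmult (RtoC (/ (2 * PI))) (Copp (Cminus (RtoC (2 * PI * Qn al n l)) If))).
    2:{ destruct If as [a b]. apply injective_projections; simpl; field; lra. }
    rewrite Cmod_mult, Cmod_opp, Cmod_R, Rabs_right.
    2: apply Rle_ge, Rlt_le, Rinv_0_lt_compat; lra.
    apply Rmult_lt_reg_l with (2 * PI). lra.
    rewrite <- Rmult_assoc, Rinv_r, Rmult_1_l by lra. lra.
Qed.

End F.


Section Q.
Variable al : R.
Hypothesis Hal : 0 < al < 1.

Lemma rs_abs_gb n : rs (fun m => Rabs (gb al m)) (S n) = 2 - Ap al n.
Proof.
  induction n. simpl. rewrite Rabs_R1. lra.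
  change (rs (fun m => Rabs (gb al m)) (S (S n))) with (rs (fun m => Rabs (gb al m)) (S n) + Rabs (gb al (S n))).
  rewrite IHn, gb_abs_S by auto. ring.
Qed.

Lemma Q_gen (v : nat -> R) V n : (forall m, (m <= n)%nat -> Rabs (v m) <= V) ->
  Rabs (rs (fun m => gb al m * (-1) ^ m * v m) (S n)) <= 2 * V.
Proof.
  intros H. eapply Rle_trans. apply rs_abs.
  assert (HV : 0 <= V) by (eapply Rle_trans; [apply Rabs_pos| apply (H 0%nat); lia]).
  apply Rle_trans with (rs (fun m => Rabs (gb al m) * V) (S n)).
  apply rs_le. intros j Hj. rewrite !Rabs_mult, pow_1_abs, Rmult_1_r.
  apply Rmult_le_compat_l. apply Rabs_pos. apply H; lia.
  transitivity (rs (fun m => V * Rabs (gb al m)) (S n)).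
  right. apply rs_ext. intros; ring.
  rewrite rs_scal, rs_abs_gb. pose proof (Ap_pos al Hal n). nra.
Qed.

Lemma bt_abs n j : Rabs (bt al n j) <= Rabs (gb al j).
Proof. unfold bt. destruct (j <=? n)%nat. lra. rewrite Rabs_R0. apply Rabs_pos. Qed.

Lemma Qn_bound n l : Rabs (Qn al n (S l)) <= 2 * (al * Rpower (INR (S l)) (-1 - al)).
Proof.
  unfold Qn. apply Q_gen. intros m _. eapply Rle_trans. apply bt_abs.
  apply Rle_trans with (Rabs (gb al (S l))). apply gb_abs_mono; auto; lia.
  apply gb_bound; auto.
Qed.

Lemma btsum_bound n j : (1 <= n)%nat ->
  Rabs (bt al n (S j) + bt al n (S (S j))) <= 2 / (INR (S j) * INR (S (S j))) + / INR n.
Proof.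
  intros Hn. pose proof (INR_S_pos j). pose proof (INR_S_pos (S j)).
  assert (P1 : 0 <= 2 / (INR (S j) * INR (S (S j)))).
  { apply Rlt_le, Rdiv_lt_0_compat. lra. nra. }
  assert (Hn' : 0 < INR n) by (apply lt_0_INR; lia).
  assert (P2 : 0 < / INR n) by (apply Rinv_0_lt_compat; auto).
  unfold bt. destruct (Nat.leb_spec (S j) n); destruct (Nat.leb_spec (S (S j)) n).
  - rewrite <- gb_pascal. pose proof (gb2_bound (al + 1) j ltac:(lra)). lra.
  - assert (n = S j) by lia. subst. rewrite Rplus_0_r.
    pose proof (gb_abs_S_le al Hal j). lra.
  - lia.
  - rewrite Rplus_0_r, Rabs_R0. lra.
Qed.

Lemma Qn_pair_bound n l : (1 <= n)%nat ->
  Rabs (Qn al n (S l) + Qn al n (S (S l))) <= 2 * (2 / (INR (S l) * INR (S (S l))) + / INR n).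
Proof.
  intros Hn. unfold Qn. rewrite <- rs_plus.
  erewrite rs_ext.
  2:{ intros m _. rewrite <- Rmult_plus_distr_l. reflexivity. }
  apply Q_gen. intros m _.
  replace (m + S (S l))%nat with (S (S (m + l))) by lia.
  replace (m + S l)%nat with (S (m + l)) by lia.
  eapply Rle_trans. apply btsum_bound; auto.
  apply Rplus_le_compat_r.
  pose proof (INR_S_pos l). pose proof (INR_S_pos (S l)).
  assert (INR (S l) <= INR (S (m + l))) by (apply le_INR; lia).
  assert (INR (S (S l)) <= INR (S (S (m + l)))) by (apply le_INR; lia).
  unfold Rdiv. apply Rmult_le_compat_l. lra.
  apply Rinv_le_contravar. nra. apply Rmult_le_compat; lra.
Qed.

Definition cc l := toeplitz (phi al) 0 l.

Lemma cc_bound l : Cmod (cc (S l)) <= 2 * (al * Rpower (INR (S l)) (-1 - al)).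
Proof.
  apply Rle_plus_epsilon. intros e He.
  destruct (fourier_lim al Hal (S l) e He) as [N HN].
  specialize (HN N (le_n N)).
  pose proof (Qn_bound N l).
  replace (cc (S l)) with (Cplus (Cminus (toeplitz (phi al) 0 (S l)) (RtoC (Qn al N (S l)))) (RtoC (Qn al N (S l)))) by (unfold cc; ring).
  eapply Rle_trans. apply Cmod_triangle. rewrite Cmod_R. lra.
Qed.

Lemma cc_pair_bound l : Cmod (Cplus (cc (S l)) (cc (S (S l)))) <= 4 / (INR (S l) * INR (S (S l))).
Proof.
  apply Rle_plus_epsilon. intros e He.
  assert (He3 : 0 < e / 3) by lra.
  destruct (fourier_lim al Hal (S l) _ He3) as [N1 HN1].
  destruct (fourier_lim al Hal (S (S l)) _ He3) as [N2 HN2].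
  destruct (nat_above (6 / e)) as [N3 HN3].
  set (n := (S N1 + N2 + N3)%nat).
  specialize (HN1 n ltac:(unfold n; lia)). specialize (HN2 n ltac:(unfold n; lia)).
  pose proof (Qn_pair_bound n l ltac:(unfold n; lia)).
  assert (Hn : 2 * / INR n <= e / 3).
  { assert (INR N3 <= INR n) by (apply le_INR; unfold n; lia).
    assert (0 < 6 / e) by (apply Rdiv_lt_0_compat; lra).
    assert (0 < INR n) by lra.
    apply Rmult_le_reg_r with (INR n); auto.
    rewrite Rmult_assoc, Rinv_l, Rmult_1_r by lra.
    assert (6 / e * e = 6) by (field; lra).
    unfold Rdiv in *. nra. }
  replace (Cplus (cc (S l)) (cc (S (S l)))) with
    (Cplus (Cplus (Cminus (toeplitz (phi al) 0 (S l)) (RtoC (Qn al n (S l))))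
                  (Cminus (toeplitz (phi al) 0 (S (S l))) (RtoC (Qn al n (S (S l))))))
           (RtoC (Qn al n (S l) + Qn al n (S (S l))))).
  2:{ unfold cc. apply injective_projections; simpl; ring. }
  eapply Rle_trans. apply Cmod_triangle. rewrite Cmod_R.
  eapply Rle_trans. apply Rplus_le_compat_r. apply Cmod_triangle.
  replace (4 / (INR (S l) * INR (S (S l)))) with (2 * (2 / (INR (S l) * INR (S (S l))))) by (unfold Rdiv; ring).
  lra.
Qed.

End Q.


Lemma rs_first g n : rs g (S n) = g 0%nat + rs (fun i => g (S i)) n.
Proof. induction n. simpl. ring. change (rs g (S (S n))) with (rs g (S n) + g (S n)). rewrite IHn. simpl. ring. Qed.

Lemma rs_rev h n : rs (fun i => h (n - i)%nat) n = rs (fun i => h (S i)) n.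
Proof.
  induction n. reflexivity.
  rewrite rs_first. simpl (S n - 0)%nat. simpl (fun i => h (S n - S i)%nat).
  change (rs (fun i => h (S n - S i)%nat) n) with (rs (fun i => h (n - i)%nat) n).
  rewrite IHn. simpl. ring.
Qed.

Lemma rs_split g a b : rs g (a + b) = rs g a + rs (fun i => g (a + i)%nat) b.
Proof. induction b. rewrite Nat.add_0_r. simpl; ring. rewrite Nat.add_succ_r. simpl. rewrite IHb. ring. Qed.

Lemma rs_len_mono g a b : (a <= b)%nat -> (forall i, 0 <= g i) -> rs g a <= rs g b.
Proof.
  intros H Hg. replace b with (a + (b - a))%nat by lia. rewrite rs_split.
  assert (0 <= rs (fun i => g (a + i)%nat) (b - a)) by (apply rs_nonneg; auto). lra.
Qed.

Lemma Rp_pos x y : 0 < Rpower x y.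
Proof. apply exp_pos. Qed.

Lemma Rp_inv1 x : 0 < x -> Rpower x (-1) = / x.
Proof. intros. replace (-1) with (- (1)) by ring. rewrite Rpower_Ropp, Rpower_1; auto. Qed.

Lemma Rp_base_neg a b y : 0 < a <= b -> y <= 0 -> Rpower b y <= Rpower a y.
Proof.
  intros Hab Hy. replace y with (- (- y)) by ring. rewrite (Rpower_Ropp b (- y)), (Rpower_Ropp a (- y)).
  apply Rinv_le_contravar. apply Rp_pos. apply Rle_Rpower_l; lra.
Qed.

Lemma Rp_1 y : Rpower 1 y = 1.
Proof. unfold Rpower. rewrite ln_1, Rmult_0_r. apply exp_0. Qed.

Lemma Rp_small y eta : 0 < y -> 0 < eta -> exists N0 : nat, (1 <= N0)%nat /\
  forall N : nat, (N0 <= N)%nat -> Rpower (INR N) (- y) < eta.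
Proof.
  intros Hy He. destruct (nat_above (exp (- ln eta / y))) as [n Hn].
  exists (S n). split. lia. intros N HN.
  assert (INR (S n) <= INR N) by (apply le_INR; auto). rewrite S_INR in H.
  assert (0 < exp (- ln eta / y)) by apply exp_pos.
  unfold Rpower. rewrite <- (exp_ln eta) by auto. apply exp_increasing.
  assert (- ln eta / y < ln (INR N)).
  { rewrite <- (ln_exp (- ln eta / y)) at 1. apply ln_increasing; auto. lra. }
  apply Rmult_lt_compat_l with (r := y) in H1; [|lra].
  replace (y * (- ln eta / y)) with (- ln eta) in H1 by (field; lra). lra.
Qed.

Lemma powsum_step P g : 1 <= P -> 0 <= g < 1 ->
  (1 - g) * Rpower (P + 1) (- g) <= Rpower (P + 1) (1 - g) - Rpower P (1 - g).
Proof.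
  intros HP Hg.
  destruct (MVT_gen (fun x => Rpower x (1 - g)) P (P + 1) (fun x => (1 - g) * Rpower x (1 - g - 1))) as [c [Hc E]].
  - intros x Hx. rewrite Rmin_left, Rmax_right in Hx by lra.
    apply is_derive_Reals. apply derivable_pt_lim_power. lra.
  - intros x Hx. rewrite Rmin_left, Rmax_right in Hx by lra.
    apply derivable_continuous_pt. exists ((1 - g) * Rpower x (1 - g - 1)).
    apply derivable_pt_lim_power. lra.
  - rewrite Rmin_left, Rmax_right in Hc by lra.
    rewrite E. replace (P + 1 - P) with 1 by ring. rewrite Rmult_1_r.
    apply Rmult_le_compat_l. lra. replace (1 - g - 1) with (- g) by ring.
    apply Rp_base_neg; lra.
Qed.

Lemma powsum P g : (1 <= P)%nat -> 0 <= g < 1 ->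
  rs (fun i => Rpower (INR (S i)) (- g)) P <= Rpower (INR P) (1 - g) / (1 - g).
Proof.
  intros HP Hg. induction P. lia.
  destruct P.
  - simpl. rewrite Rplus_0_l, !Rp_1. apply Rmult_le_reg_r with (1 - g). lra.
    unfold Rdiv. rewrite Rmult_assoc, Rinv_l, Rmult_1_r by lra. lra.
  - change (rs (fun i => Rpower (INR (S i)) (- g)) (S (S P))) with
      (rs (fun i => Rpower (INR (S i)) (- g)) (S P) + Rpower (INR (S (S P))) (- g)).
    specialize (IHP ltac:(lia)).
    pose proof (powsum_step (INR (S P)) g). rewrite <- S_INR in H.
    assert (1 <= INR (S P)) by (apply (le_INR 1); lia).
    specialize (H H0 Hg).
    apply Rle_trans with (Rpower (INR (S P)) (1 - g) / (1 - g) + Rpower (INR (S (S P))) (- g)). lra.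
    apply Rmult_le_reg_r with (1 - g). lra.
    unfold Rdiv. rewrite Rmult_plus_distr_r, !Rmult_assoc, Rinv_l, !Rmult_1_r by lra.
    lra.
Qed.

Lemma sbp (u x : nat -> R) M : x 0%nat = 0 ->
  2 * rs (fun k => u (S k) * x (S k)) M =
  rs (fun k => (u (S k) + u (S (S k))) * x (S k)) M + rs (fun k => u (S k) * (x (S k) - x k)) M
  - u (S M) * x M.
Proof.
  intros H0. induction M.
  - simpl. rewrite H0. ring.
  - simpl rs. rewrite Rmult_plus_distr_l, IHM. ring.
Qed.

Lemma Rp_N_combine N al b : 0 < N -> Rpower N al * / N * Rpower N b = Rpower N (al - 1 + b).
Proof.
  intros HN. rewrite <- Rp_inv1 by auto. rewrite <- !Rpower_plus. f_equal; ring.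
Qed.

Section Low.
Variables (al C1 C2 K : R) (u x : nat -> R) (N M : nat).
Hypothesis Hal : 0 < al < 1.
Hypothesis HC1 : 0 <= C1.
Hypothesis HC2 : 0 <= C2.
Hypothesis HK : 0 <= K.
Hypothesis Hu1 : forall l, Rabs (u (S l)) <= C1 * Rpower (INR (S l)) (-1 - al).
Hypothesis Hu2 : forall l, Rabs (u (S l) + u (S (S l))) <= C2 / (INR (S l) * INR (S (S l))).
Hypothesis HM : (1 <= M)%nat.
Hypothesis HMN : (M < N)%nat.
Hypothesis HMN2 : (N <= 2 * (M + 1))%nat.
Hypothesis Hx0 : x 0%nat = 0.
Hypothesis Hx1 : forall l, (l <= M)%nat -> Rabs (x l) <= K * INR l / INR N.
Hypothesis Hx2 : forall k, (k < M)%nat -> Rabs (x (S k) - x k) <= K / INR N.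

Let be := (1 - al) / 2.

Lemma low_bound :
  Rpower (INR N) al * Rabs (rs (fun k => u (S k) * x (S k)) M)
  <= ((C1 + C2) * K / (2 * be) + C1 * K) * Rpower (INR N) (- be).
Proof.
  assert (Hbe : 0 < be < 1) by (unfold be; lra).
  assert (HN : 0 < INR N) by (apply lt_0_INR; lia).
  assert (HN1 : 1 <= INR N) by (apply (le_INR 1); lia).
  set (W := rs (fun i => Rpower (INR (S i)) (- (1 - be))) N).
  assert (HW : W <= Rpower (INR N) be / be).
  { unfold W. pose proof (powsum N (1 - be) ltac:(lia) ltac:(lra)).
    replace (1 - (1 - be)) with be in H by ring. auto. }
  assert (Hpk : forall k, Rpower (INR (S k)) (-1) <= Rpower (INR (S k)) (- (1 - be))).
  { intros k. apply Rle_Rpower. apply (le_INR 1); lia. lra. }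
  assert (Hpk2 : forall k, Rpower (INR (S k)) (-1 - al) <= Rpower (INR (S k)) (- (1 - be))).
  { intros k. apply Rle_Rpower. apply (le_INR 1); lia. unfold be; lra. }
  assert (Hpos : forall k, 0 <= Rpower (INR (S k)) (- (1 - be))) by (intros; apply Rlt_le, Rp_pos).
  assert (HD : Rabs (rs (fun k => (u (S k) + u (S (S k))) * x (S k)) M) <= C2 * K / INR N * W).
  { eapply Rle_trans. apply rs_abs.
    apply Rle_trans with (rs (fun k => C2 * K / INR N * Rpower (INR (S k)) (- (1 - be))) M).
    - apply rs_le. intros k Hk. rewrite Rabs_mult.
      pose proof (Hu2 k). pose proof (Hx1 (S k) ltac:(lia)).
      pose proof (INR_S_pos k). pose proof (INR_S_pos (S k)).
      apply Rle_trans with (C2 / (INR (S k) * INR (S (S k))) * (K * INR (S k) / INR N)).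
      apply Rmult_le_compat; auto; apply Rabs_pos.
      apply Rle_trans with (C2 * K / INR N * Rpower (INR (S k)) (-1)).
      rewrite Rp_inv1 by auto.
      replace (C2 / (INR (S k) * INR (S (S k))) * (K * INR (S k) / INR N)) with
        (C2 * K / INR N * / INR (S (S k))) by (field; lra).
      apply Rmult_le_compat_l. apply Rmult_le_pos. nra. apply Rlt_le, Rinv_0_lt_compat; auto.
      apply Rinv_le_contravar; auto. apply le_INR; lia.
      apply Rmult_le_compat_l. apply Rmult_le_pos. nra. apply Rlt_le, Rinv_0_lt_compat; auto. apply Hpk.
    - rewrite rs_scal. apply Rmult_le_compat_l. apply Rmult_le_pos. nra. apply Rlt_le, Rinv_0_lt_compat; auto.
      apply rs_len_mono. lia. auto. }
  assert (HE : Rabs (rs (fun k => u (S k) * (x (S k) - x k)) M) <= C1 * K / INR N * W).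
  { eapply Rle_trans. apply rs_abs.
    apply Rle_trans with (rs (fun k => C1 * K / INR N * Rpower (INR (S k)) (- (1 - be))) M).
    - apply rs_le. intros k Hk. rewrite Rabs_mult.
      pose proof (Hu1 k). pose proof (Hx2 k Hk).
      apply Rle_trans with (C1 * Rpower (INR (S k)) (- (1 - be)) * (K / INR N)).
      apply Rmult_le_compat; try apply Rabs_pos; auto.
      eapply Rle_trans; [apply H|]. apply Rmult_le_compat_l; auto.
      apply Req_le. field. lra.
    - rewrite rs_scal. apply Rmult_le_compat_l. apply Rmult_le_pos. nra. apply Rlt_le, Rinv_0_lt_compat; auto.
      apply rs_len_mono. lia. auto. }
  assert (HB : Rabs (u (S M) * x M) <= 2 * C1 * K / INR N).
  { rewrite Rabs_mult. pose proof (Hu1 M). pose proof (Hx1 M ltac:(lia)).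
    assert (INR M <= INR N) by (apply le_INR; lia).
    assert (Hm : INR N <= 2 * INR (S M)).
    { assert (H2 : INR N <= INR (2 * S M)) by (apply le_INR; lia). rewrite mult_INR in H2.
      replace (INR 2) with 2 in H2 by (simpl; ring). exact H2. }
    pose proof (INR_S_pos M).
    assert (Rpower (INR (S M)) (-1 - al) <= / INR (S M)).
    { rewrite <- Rp_inv1 by auto. apply Rle_Rpower. apply (le_INR 1); lia. lra. }
    assert (Rabs (x M) <= K).
    { eapply Rle_trans; [apply H0|]. apply Rmult_le_reg_r with (INR N); auto.
      unfold Rdiv. rewrite Rmult_assoc, Rinv_l by lra. nra. }
    apply Rle_trans with (C1 * / INR (S M) * K).
    apply Rmult_le_compat; try apply Rabs_pos; auto. eapply Rle_trans; [apply H|]. apply Rmult_le_compat_l; auto.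
    apply Rle_trans with (C1 * (2 / INR N) * K).
    apply Rmult_le_compat_r; auto. apply Rmult_le_compat_l; auto.
    apply Rmult_le_reg_r with (INR (S M) * INR N). nra.
    replace (/ INR (S M) * (INR (S M) * INR N)) with (INR N) by (field; lra).
    replace (2 / INR N * (INR (S M) * INR N)) with (2 * INR (S M)) by (field; lra). lra.
    apply Req_le. field. lra. }
  pose proof (sbp u x M Hx0) as Hs.
  assert (Habs : Rabs (rs (fun k => u (S k) * x (S k)) M) <= / 2 * ((C1 + C2) * K / INR N * W + 2 * C1 * K / INR N)).
  { replace (rs (fun k => u (S k) * x (S k)) M) with
      (/ 2 * (rs (fun k => (u (S k) + u (S (S k))) * x (S k)) M + rs (fun k => u (S k) * (x (S k) - x k)) M - u (S M) * x M)) by lra.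
    rewrite Rabs_mult, Rabs_right by lra. apply Rmult_le_compat_l. lra.
    match goal with |- Rabs (?A + ?B - ?C) <= _ => replace (A + B - C) with (A + B + - C) by ring end.
    eapply Rle_trans. apply Rabs_triang. rewrite Rabs_Ropp.
    eapply Rle_trans. apply Rplus_le_compat_r. apply Rabs_triang.
    replace ((C1 + C2) * K / INR N * W) with (C2 * K / INR N * W + C1 * K / INR N * W) by (field; lra).
    lra. }
  assert (HW0 : 0 <= W) by (apply rs_nonneg; auto).
  assert (HNp : 0 < Rpower (INR N) al) by apply Rp_pos.
  eapply Rle_trans. apply Rmult_le_compat_l. lra. apply Habs.
  assert (E1 : Rpower (INR N) al * / INR N * Rpower (INR N) be = Rpower (INR N) (- be)).
  { rewrite Rp_N_combine by auto. f_equal. unfold be. field. }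
  assert (E2 : Rpower (INR N) al * / INR N <= Rpower (INR N) (- be)).
  { rewrite <- (Rp_inv1 (INR N)) by auto. rewrite <- Rpower_plus. apply Rle_Rpower; auto. unfold be; lra. }
  assert (W * Rpower (INR N) al * / INR N <= Rpower (INR N) (- be) / be).
  { apply Rle_trans with (Rpower (INR N) be / be * Rpower (INR N) al * / INR N).
    apply Rmult_le_compat_r. apply Rlt_le, Rinv_0_lt_compat; auto.
    apply Rmult_le_compat_r; lra.
    rewrite <- E1. apply Req_le. field. lra. }
  pose proof (Rp_pos (INR N) (- be)).
  assert (0 <= (C1 + C2) * K) by nra.
  assert (0 <= C1 * K) by nra.
  replace (Rpower (INR N) al * (/ 2 * ((C1 + C2) * K / INR N * W + 2 * C1 * K / INR N)))
    with (/ 2 * ((C1 + C2) * K) * (W * Rpower (INR N) al * / INR N) + C1 * K * (Rpower (INR N) al * / INR N))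
    by (field; lra).
  replace (((C1 + C2) * K / (2 * be) + C1 * K) * Rpower (INR N) (- be))
    with (/ 2 * ((C1 + C2) * K) * (Rpower (INR N) (- be) / be) + C1 * K * Rpower (INR N) (- be))
    by (field; lra).
  apply Rplus_le_compat; apply Rmult_le_compat_l; auto; lra.
Qed.
End Low.

Lemma Rp_identity N q al g : 0 < N -> 0 < q ->
  Rpower N al * Rpower (N / 2) (-1 - al) * Rpower N g * Rpower (N / q) (1 - g)
  = Rpower 2 (1 + al) * Rpower q (g - 1).
Proof.
  intros HN Hq. unfold Rpower. rewrite !ln_div by lra. rewrite <- !exp_plus. f_equal. ring.
Qed.

Section High.
Variables (al C1 B g : R) (u x : nat -> R) (N J q : nat).
Hypothesis Hal : 0 < al < 1.
Hypothesis HC1 : 0 <= C1.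
Hypothesis HB : 0 <= B.
Hypothesis Hg : 0 <= g <= 1 - al.
Hypothesis Hu1 : forall l, Rabs (u (S l)) <= C1 * Rpower (INR (S l)) (-1 - al).
Hypothesis HJ : (1 <= J)%nat.
Hypothesis Hq : (2 <= q)%nat.
Hypothesis HqJ : (q * J <= N)%nat.
Hypothesis Hx : forall i, (i < J - 1)%nat ->
  Rabs (x (N - J + 1 + i)%nat) <= B * Rpower (INR (J - 1 - i)) (- g) * Rpower (INR N) g.

Lemma high_bound :
  Rpower (INR N) al * Rabs (rs (fun i => u (N - J + 1 + i)%nat * x (N - J + 1 + i)%nat) (J - 1))
  <= C1 * B * Rpower 2 (1 + al) * Rpower (INR q) (- al) / al.
Proof.
  assert (HN : 0 < INR N) by (apply lt_0_INR; lia).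
  assert (HqR : 2 <= INR q) by (replace 2 with (INR 2) by (simpl; ring); apply le_INR; auto).
  assert (HJR : 1 <= INR J) by (apply (le_INR 1); auto).
  set (A := C1 * Rpower (INR N / 2) (-1 - al) * (B * Rpower (INR N) g)).
  assert (HA : 0 <= A).
  { unfold A. pose proof (Rp_pos (INR N / 2) (-1 - al)). pose proof (Rp_pos (INR N) g).
    apply Rmult_le_pos. nra. nra. }
  assert (H1 : Rabs (rs (fun i => u (N - J + 1 + i)%nat * x (N - J + 1 + i)%nat) (J - 1))
     <= A * rs (fun i => Rpower (INR (S i)) (- g)) J).
  { eapply Rle_trans. apply rs_abs.
    apply Rle_trans with (rs (fun i => A * Rpower (INR (J - 1 - i)) (- g)) (J - 1)).
    - apply rs_le. intros i Hi. rewrite Rabs_mult.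
      replace (N - J + 1 + i)%nat with (S (N - J + i)) by lia.
      pose proof (Hu1 (N - J + i)). pose proof (Hx i Hi).
      replace (N - J + 1 + i)%nat with (S (N - J + i)) in H0 by lia.
      assert (Hl : INR N / 2 <= INR (S (N - J + i))).
      { assert (INR N <= INR (2 * S (N - J + i))) by (apply le_INR; nia).
        rewrite mult_INR in H1. replace (INR 2) with 2 in H1 by (simpl; ring). lra. }
      assert (Rpower (INR (S (N - J + i))) (-1 - al) <= Rpower (INR N / 2) (-1 - al)).
      { apply Rp_base_neg. lra. lra. }
      unfold A.
      apply Rle_trans with ((C1 * Rpower (INR N / 2) (-1 - al)) * (B * Rpower (INR (J - 1 - i)) (- g) * Rpower (INR N) g)).
      apply Rmult_le_compat; try apply Rabs_pos; auto.
      eapply Rle_trans; [apply H|]. apply Rmult_le_compat_l; auto.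
      apply Req_le. ring.
    - rewrite rs_scal. apply Rmult_le_compat_l; auto.
      rewrite (rs_rev (fun j => Rpower (INR j) (- g)) (J - 1)).
      apply rs_len_mono. lia. intros; apply Rlt_le, Rp_pos. }
  pose proof (powsum J g HJ ltac:(lra)) as H2.
  assert (H3 : Rpower (INR J) (1 - g) <= Rpower (INR N / INR q) (1 - g)).
  { apply Rle_Rpower_l. lra. split. lra.
    apply Rmult_le_reg_r with (INR q). lra. unfold Rdiv. rewrite Rmult_assoc, Rinv_l, Rmult_1_r by lra.
    rewrite <- mult_INR, Nat.mul_comm. apply le_INR; auto. }
  assert (H4 : Rpower (INR q) (g - 1) <= Rpower (INR q) (- al)) by (apply Rle_Rpower; lra).
  assert (H5 : / (1 - g) <= / al) by (apply Rinv_le_contravar; lra).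
  pose proof (Rp_identity (INR N) (INR q) al g HN ltac:(lra)) as HI.
  pose proof (Rp_pos (INR N) al). pose proof (Rp_pos (INR N / INR q) (1 - g)).
  pose proof (Rp_pos 2 (1 + al)). pose proof (Rp_pos (INR q) (g - 1)).
  apply Rle_trans with (Rpower (INR N) al * (A * (Rpower (INR J) (1 - g) / (1 - g)))).
  apply Rmult_le_compat_l. lra. eapply Rle_trans; [apply H1|]. apply Rmult_le_compat_l; auto.
  apply Rle_trans with (Rpower (INR N) al * (A * (Rpower (INR N / INR q) (1 - g) / al))).
  apply Rmult_le_compat_l. lra. apply Rmult_le_compat_l; auto.
  unfold Rdiv. apply Rmult_le_compat; auto. apply Rlt_le, Rp_pos. apply Rlt_le, Rinv_0_lt_compat; lra.
  unfold A.
  replace (Rpower (INR N) al * (C1 * Rpower (INR N / 2) (-1 - al) * (B * Rpower (INR N) g) *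
     (Rpower (INR N / INR q) (1 - g) / al)))
   with (C1 * B / al * (Rpower (INR N) al * Rpower (INR N / 2) (-1 - al) * Rpower (INR N) g * Rpower (INR N / INR q) (1 - g)))
   by (field; lra).
  rewrite HI.
  replace (C1 * B * Rpower 2 (1 + al) * Rpower (INR q) (- al) / al) with
    (C1 * B / al * (Rpower 2 (1 + al) * Rpower (INR q) (- al))) by (field; lra).
  apply Rmult_le_compat_l. apply Rmult_le_pos. nra. apply Rlt_le, Rinv_0_lt_compat; lra.
  apply Rmult_le_compat_l; lra.
Qed.
End High.


Lemma main_real (al : R) (u : nat -> R) (f : R -> R) (C1 C2 : R) :
  0 < al < 1 -> 0 <= C1 -> 0 <= C2 ->
  (forall l, Rabs (u (S l)) <= C1 * Rpower (INR (S l)) (-1 - al)) ->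
  (forall l, Rabs (u (S l) + u (S (S l))) <= C2 / (INR (S l) * INR (S (S l)))) ->
  L1_weight al f -> locally_contracting f -> f 0 = 0 ->
  forall e, 0 < e -> exists N0, forall N, (N0 <= N)%nat ->
    Rpower (INR N) al * Rabs (rs (fun l => u l * XN f N l) (S N)) < e.
Proof.
  intros Hal HC1 HC2 Hu1 Hu2 HL1 HLC Hf0 e He.
  destruct HL1 as [g [Hg [_ [Bm [d [Hd HB]]]]]].
  set (B := Rabs Bm).
  assert (HB' : forall t, 0 < t < d -> Rabs (f (1 - t)) <= B * Rpower t (- g)).
  { intros t Ht. eapply Rle_trans. apply HB; auto. rewrite Rabs_right by (apply Rle_ge, Rlt_le, Rp_pos).
    apply Rmult_le_compat_r. apply Rlt_le, Rp_pos. apply Rle_abs. }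
  assert (HB0 : 0 <= B) by apply Rabs_pos.
  set (Hc := C1 * B * Rpower 2 (1 + al) / al).
  assert (HHc : 0 <= Hc).
  { unfold Hc. apply Rmult_le_pos. apply Rmult_le_pos. nra. apply Rlt_le, Rp_pos.
    apply Rlt_le, Rinv_0_lt_compat; lra. }
  destruct (Rp_small al (e / 2 / (Hc + 1))) as [Q0 [_ HQ0]]. lra.
  apply Rdiv_lt_0_compat; lra.
  destruct (nat_above (/ d)) as [Qd HQd].
  set (q := (Q0 + Qd + 2)%nat).
  assert (Hq2 : (2 <= q)%nat) by (unfold q; lia).
  assert (HqR : 2 <= INR q) by (replace 2 with (INR 2) by (simpl; ring); apply le_INR; auto).
  assert (Hqd : / INR q < d).
  { assert (INR Qd <= INR q) by (apply le_INR; unfold q; lia).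
    assert (0 < / d) by (apply Rinv_0_lt_compat; auto).
    rewrite <- (Rinv_inv d). apply Rinv_lt_contravar. nra. lra. }
  assert (Hqe : Hc * Rpower (INR q) (- al) < e / 2).
  { specialize (HQ0 q ltac:(unfold q; lia)).
    apply Rle_lt_trans with (Hc * (e / 2 / (Hc + 1))).
    apply Rmult_le_compat_l; auto. lra.
    apply Rmult_lt_reg_r with (Hc + 1). lra.
    replace (Hc * (e / 2 / (Hc + 1)) * (Hc + 1)) with (Hc * (e / 2)) by (field; lra). nra. }
  set (b := 1 - / (2 * INR q)).
  assert (Hb1 : b < 1).
  { unfold b. assert (0 < / (2 * INR q)) by (apply Rinv_0_lt_compat; lra). lra. }
  destruct (HLC 0 b (Rle_refl 0) Hb1) as [K HK].
  set (K' := Rabs K).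
  assert (HK' : 0 <= K') by apply Rabs_pos.
  assert (HKK : forall x y, 0 <= x <= b -> 0 <= y <= b -> Rabs (f x - f y) <= K' * Rabs (x - y)).
  { intros. eapply Rle_trans. apply HK; auto. apply Rmult_le_compat_r. apply Rabs_pos. apply Rle_abs. }
  set (be := (1 - al) / 2).
  set (A := (C1 + C2) * K' / (2 * be) + C1 * K').
  assert (HA : 0 <= A).
  { unfold A, be. apply Rplus_le_le_0_compat; [|nra]. apply Rmult_le_pos. nra. apply Rlt_le, Rinv_0_lt_compat; lra. }
  destruct (Rp_small be (e / 2 / (A + 1))) as [N1 [HN1 HN1']]. unfold be; lra.
  apply Rdiv_lt_0_compat; lra.
  exists (N1 + 2 * q)%nat. intros N HN.
  set (J := (N / q)%nat).
  assert (HqJ : (q * J <= N)%nat) by (apply Nat.Div0.mul_div_le).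
  assert (HqJ2 : (N < q * S J)%nat) by (apply Nat.mul_succ_div_gt; lia).
  assert (HJ2 : (2 <= J)%nat) by nia.
  set (M := (N - J)%nat).
  set (x := XN f N).
  assert (HNpos : (0 < N)%nat) by lia.
  assert (HNR : 0 < INR N) by (apply lt_0_INR; auto).
  assert (Hxl : forall l, (l < N)%nat -> x l = f (INR l / INR N)).
  { intros l Hl. unfold x, XN. destruct (Nat.ltb_spec l N); [reflexivity|lia]. }
  assert (Hx0 : x 0%nat = 0). { rewrite Hxl by lia. simpl. unfold Rdiv. rewrite Rmult_0_l. auto. }
  assert (HxN : x N = 0). { unfold x, XN. destruct (Nat.ltb_spec N N); [lia|reflexivity]. }
  assert (Hlow : forall l, (l <= M)%nat -> 0 <= INR l / INR N <= b).
  { intros l Hl. split. apply Rmult_le_pos. apply pos_INR. apply Rlt_le, Rinv_0_lt_compat; auto.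
    assert (Hn : (2 * q * l + N <= 2 * q * N)%nat) by (unfold M in Hl; nia).
    apply le_INR in Hn. rewrite !plus_INR, !mult_INR in Hn. replace (INR 2) with 2 in Hn by (simpl; ring).
    unfold b. apply Rmult_le_reg_r with (2 * INR q * INR N). nra.
    replace (INR l / INR N * (2 * INR q * INR N)) with (2 * INR q * INR l) by (field; lra).
    replace ((1 - / (2 * INR q)) * (2 * INR q * INR N)) with (2 * INR q * INR N - INR N) by (field; lra).
    lra. }
  assert (Hb0 : 0 <= 0 <= b). { unfold b. assert (/ (2 * INR q) <= 1 / 2). { apply Rle_trans with (/ 4).
    apply Rinv_le_contravar; lra. lra. } lra. }
  assert (Hx1 : forall l, (l <= M)%nat -> Rabs (x l) <= K' * INR l / INR N).
  { intros l Hl. rewrite Hxl by (unfold M in Hl; lia).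
    replace (f (INR l / INR N)) with (f (INR l / INR N) - f 0) by (rewrite Hf0; ring).
    eapply Rle_trans. apply HKK; auto.
    rewrite Rminus_0_r, Rabs_right. unfold Rdiv; lra.
    apply Rle_ge, Rmult_le_pos. apply pos_INR. apply Rlt_le, Rinv_0_lt_compat; auto. }
  assert (Hx2 : forall k, (k < M)%nat -> Rabs (x (S k) - x k) <= K' / INR N).
  { intros k Hk. rewrite !Hxl by (unfold M in Hk; lia).
    eapply Rle_trans. apply HKK; apply Hlow; lia.
    replace (INR (S k) / INR N - INR k / INR N) with (/ INR N) by (rewrite S_INR; field; lra).
    rewrite Rabs_right. unfold Rdiv; lra. apply Rle_ge, Rlt_le, Rinv_0_lt_compat; auto. }
  pose proof (low_bound al C1 C2 K' u x N M Hal HC1 HC2 HK' Hu1 Hu2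
     ltac:(unfold M; nia) ltac:(unfold M; lia) ltac:(unfold M; nia) Hx0 Hx1 Hx2) as Lo.
  assert (Hxh : forall i, (i < J - 1)%nat ->
      Rabs (x (N - J + 1 + i)%nat) <= B * Rpower (INR (J - 1 - i)) (- g) * Rpower (INR N) g).
  { intros i Hi. rewrite Hxl by lia.
    set (t := INR (J - 1 - i) / INR N).
    assert (Ht : INR (N - J + 1 + i) / INR N = 1 - t).
    { unfold t. assert (INR (N - J + 1 + i) + INR (J - 1 - i) = INR N) by (rewrite <- plus_INR; f_equal; lia).
      assert (E : INR (N - J + 1 + i) = INR N - INR (J - 1 - i)) by lra.
      rewrite E. field. lra. }
    rewrite Ht.
    assert (Ht0 : 0 < t).
    { unfold t. apply Rdiv_lt_0_compat; auto. apply lt_0_INR. lia. }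
    assert (Htd : t < d).
    { apply Rle_lt_trans with (/ INR q); auto. unfold t.
      assert (INR (J - 1 - i) * INR q <= INR N).
      { rewrite <- mult_INR. apply le_INR. nia. }
      apply Rmult_le_reg_r with (INR N * INR q). nra.
      replace (INR (J - 1 - i) / INR N * (INR N * INR q)) with (INR (J - 1 - i) * INR q) by (field; lra).
      replace (/ INR q * (INR N * INR q)) with (INR N) by (field; lra). lra. }
    eapply Rle_trans. apply HB'; auto.
    rewrite Rmult_assoc. apply Rmult_le_compat_l; auto.
    unfold t, Rpower. rewrite ln_div by (auto; apply lt_0_INR; lia). rewrite <- exp_plus.
    apply Req_le. f_equal. ring. }
  pose proof (high_bound al C1 B g u x N J q Hal HC1 HB0 ltac:(lra) Hu1 ltac:(lia) Hq2 HqJ Hxh) as Hi.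
  assert (Hdec : rs (fun l => u l * x l) (S N) =
     rs (fun k => u (S k) * x (S k)) M + rs (fun i => u (N - J + 1 + i)%nat * x (N - J + 1 + i)%nat) (J - 1)).
  { change (rs (fun l => u l * x l) (S N)) with (rs (fun l => u l * x l) N + u N * x N).
    rewrite HxN, Rmult_0_r, Rplus_0_r.
    replace N with (S M + (J - 1))%nat at 1 by (unfold M; lia).
    rewrite rs_split, rs_first, Hx0, Rmult_0_r, Rplus_0_l. f_equal.
    apply rs_ext. intros i _. replace (S M + i)%nat with (N - J + 1 + i)%nat by (unfold M; lia). auto. }
  rewrite Hdec.
  assert (HNa : 0 < Rpower (INR N) al) by apply Rp_pos.
  eapply Rle_lt_trans. apply Rmult_le_compat_l. lra. apply Rabs_triang.
  rewrite Rmult_plus_distr_l.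
  assert (Hlo : ((C1 + C2) * K' / (2 * be) + C1 * K') * Rpower (INR N) (- be) < e / 2).
  { fold A. specialize (HN1' N ltac:(lia)).
    apply Rle_lt_trans with (A * (e / 2 / (A + 1))). apply Rmult_le_compat_l; auto. lra.
    apply Rmult_lt_reg_r with (A + 1). lra.
    replace (A * (e / 2 / (A + 1)) * (A + 1)) with (A * (e / 2)) by (field; lra). nra. }
  unfold be in Lo, Hlo. fold Hc in Hi.
  assert (C1 * B * Rpower 2 (1 + al) * Rpower (INR q) (- al) / al = Hc * Rpower (INR q) (- al)) by (unfold Hc; field; lra).
  lra.
Qed.


Lemma sum_n_cs (u : nat -> C) n : sum_n u n = cs u (S n).
Proof.
  induction n.
  - rewrite sum_O. simpl. apply injective_projections; simpl; ring.
  - rewrite sum_Sn, IHn. reflexivity.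
Qed.

Lemma Int_part_0 : Int_part 0 = 0%Z.
Proof.
  unfold Int_part. assert (up 0 = 1%Z).
  { symmetry. apply tech_up; simpl; lra. }
  rewrite H. reflexivity.
Qed.

Theorem mainTheorem3 (a : R) (f : R -> R) :
  0 < a < 1 ->
  L1_weight a f ->
  locally_contracting f ->
  f 0 = 0 ->
  is_alpha_derivative a f 0 (RtoC 0).
Proof.
  intros Ha HL HLC Hf0.
  unfold is_alpha_derivative. intros P [eps HP].
  assert (He : 0 < eps / 4) by (destruct eps; simpl; lra).
  assert (B1 : forall l, Rabs (fst (cc a (S l))) <= 2 * a * Rpower (INR (S l)) (-1 - a)).
  { intros l. eapply Rle_trans. apply fst_le_Cmod. eapply Rle_trans. apply cc_bound; auto. lra. }
  assert (B2 : forall l, Rabs (snd (cc a (S l))) <= 2 * a * Rpower (INR (S l)) (-1 - a)).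
  { intros l. eapply Rle_trans. apply snd_le_Cmod. eapply Rle_trans. apply cc_bound; auto. lra. }
  assert (P1 : forall l, Rabs (fst (cc a (S l)) + fst (cc a (S (S l)))) <= 4 / (INR (S l) * INR (S (S l)))).
  { intros l. eapply Rle_trans; [|apply cc_pair_bound; auto].
    change (fst (cc a (S l)) + fst (cc a (S (S l)))) with (fst (Cplus (cc a (S l)) (cc a (S (S l))))).
    apply fst_le_Cmod. exact Ha. }
  assert (P2 : forall l, Rabs (snd (cc a (S l)) + snd (cc a (S (S l)))) <= 4 / (INR (S l) * INR (S (S l)))).
  { intros l. eapply Rle_trans; [|apply cc_pair_bound; auto].
    change (snd (cc a (S l)) + snd (cc a (S (S l)))) with (snd (Cplus (cc a (S l)) (cc a (S (S l))))).
    apply snd_le_Cmod. exact Ha. }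
  destruct (main_real a (fun l => fst (cc a l)) f (2 * a) 4 Ha ltac:(lra) ltac:(lra) B1 P1 HL HLC Hf0 _ He)
    as [N1 HN1].
  destruct (main_real a (fun l => snd (cc a l)) f (2 * a) 4 Ha ltac:(lra) ltac:(lra) B2 P2 HL HLC Hf0 _ He)
    as [N2 HN2].
  exists (N1 + N2)%nat. intros n Hn. apply HP.
  apply ballC_Cmod.
  specialize (HN1 n ltac:(lia)). specialize (HN2 n ltac:(lia)).
  unfold alpha_seq. rewrite Rmult_0_r, Int_part_0. simpl (Z.to_nat 0).
  rewrite sum_n_cs.
  set (Sm := cs (fun l => Cmult (toeplitz (phi a) 0 l) (RtoC (XN f n l))) (S n)).
  assert (Ef : fst Sm = rs (fun l => fst (cc a l) * XN f n l) (S n)).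
  { unfold Sm. rewrite cs_fst. apply rs_ext. intros j _. unfold cc. simpl. ring. }
  assert (Es : snd Sm = rs (fun l => snd (cc a l) * XN f n l) (S n)).
  { unfold Sm. rewrite cs_snd. apply rs_ext. intros j _. unfold cc. simpl. ring. }
  replace (Cminus (Cmult (RtoC (Rpower (INR n) a)) Sm) (RtoC 0)) with (Cmult (RtoC (Rpower (INR n) a)) Sm) by ring.
  rewrite Cmod_mult, Cmod_R, Rabs_right by (apply Rle_ge, Rlt_le, Rp_pos).
  pose proof (Cmod_le_sum Sm). rewrite Ef, Es in H.
  pose proof (Rp_pos (INR n) a).
  apply Rle_lt_trans with (Rpower (INR n) a * (Rabs (rs (fun l => fst (cc a l) * XN f n l) (S n)) + Rabs (rs (fun l => snd (cc a l) * XN f n l) (S n)))).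
  apply Rmult_le_compat_l; lra.
  destruct eps as [eps Heps]. simpl in *. lra.
Qed.
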